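(* Let $\mathcal C$ be a category, $n\ge0$, and $T\in Z^n(\mathcal C)$. For any two degeneracy maps $f:X\to T$ and $g:Y\to T$ in $Z^n(\mathcal C)$ that are sent to the same map of $Z^n(1)$ by the functor $Z^n(\mathcal C)\to Z^n(1)$ (induced by the unique functor $\mathcal C\to 1$ to the terminal category), there exists an isomorphism $\varphi:X\to Y$ such that $f=g\circ\varphi$. In particular, $\mathrm{Deg}(T)$ is finite.
   Context: Notation: for $n\ge 0$, $[n]$ denotes $\{0,\dots,n-1\}$; $\Delta_+$ is the category of these finite total orders and order-preserving maps. For monotone $\psi:[n]\to[m]$ define $\hat\psi:[m+1]\to[n+1]$ by $\hat\psi(i)=\min(\{j\in[n]:\psi(j)\ge i\}\cup\{n\})$. Zigzags: in a category $\mathcal C$, a zigzag $X$ of length $n$ is a diagram $X(r_0)\xrightarrow{x_0} X(s_0)\xleftarrow{x'_0} X(r_1)\to\cdots\xrightarrow{x_{n-1}} X(s_{n-1})\xleftarrow{x'_{n-1}} X(r_n)$. A zigzag map $f:X\to Y$ (lengths $n$, $m$) consists of a monotone $f_s:[n]\to[m]$, regular slices $f(r_i):X(r_{\hat{f_s}(i)})\to Y(r_i)$ for $0\le i\le m$ and singular slices $f(s_j):X(s_j)\to Y(s_{f_s(j)})$ for $0\le j<n$, such that for each $0\le i<m$: if $f_s^{-1}(i)\neq\emptyset$ with least element $p$, greatest $q$, then $f(s_p)\circ x_p=y_i\circ f(r_i)$, $f(s_q)\circ x'_q=y'_i\circ f(r_{i+1})$, $f(s_j)\circ x'_j=f(s_{j+1})\circ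 x_{j+1}$ for $p\le j<q$; if $f_s^{-1}(i)=\emptyset$ then $y_i\circ f(r_i)=y'_i\circ f(r_{i+1})$. Composition: $(g\circ f)_s=g_s\circ f_s$, $(g\circ f)(s_j)=g(s_{f_s(j)})\circ f(s_j)$, $(g\circ f)(r_i)=g(r_i)\circ f(r_{\hat{g_s}(i)})$. This gives a category $Z(\mathcal C)$, functorial in $\mathcal C$ (a functor acts on all objects and slices); $Z^0(\mathcal C)=\mathcal C$, $Z^n(\mathcal C)=Z(Z^{n-1}(\mathcal C))$. $\pi:Z(\mathcal C)\to\Delta_+$ sends a zigzag of length $n$ to $[n]$ and $f$ to $f_s$; $f$ is $\pi$-vertical if $\pi(f)$ is an identity; $f:x\to y$ is $\pi$-cocartesian if for every $h:x\to y'$ and $u:\pi(y)\to\pi(y')$ with $u\circ\pi(f)=\pi(h)$ there is a unique $v:y\to y'$ with $v\circ f=h$, $\pi(v)=u$. Degeneracy maps in $Z^n(\mathcal C)$ (by induction on $n$): in $Z^0(\mathcal C)$ the isomorphisms; for $n\ge1$ the maps generated under composition by simple degeneracy maps (the $\pi$-cocartesian maps $f$ with $\pi(f)$ a monomorphism of $\Delta_+$) and parallel degeneracy maps (the $\pi$-vertical maps whose regular and singular slices are all degeneracy maps in $Z^{n-1}(\mathcal C)$). Degeneracy maps are monomorphisms; $\mathrm{Deg}(T)$ is the subposet of the subobject poset $\mathrm{Sub}(T)$ consisting of subobjects represented by a degeneracy map into $T$. *)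

(* Defs.v *)
From mathcomp Require Import all_boot.
Set Implicit Arguments. Unset Strict Implicit. Unset Printing Implicit Defensive.

(** * Categories (Leibniz equality of morphisms) *)
Record category := Category {
  cob : Type;
  chom : cob -> cob -> Type;
  ccomp : forall a b c, chom b c -> chom a b -> chom a c;
  cid : forall a, chom a a;
  ccompA : forall a b c d (h : chom c d) (g : chom b c) (f : chom a b),
      ccomp h (ccomp g f) = ccomp (ccomp h g) f;
  ccomp1l : forall a b (f : chom a b), ccomp (cid b) f = f;
  ccomp1r : forall a b (f : chom a b), ccomp f (cid a) = f }.

(** Data of a category together with predicates singling out the genuine
    objects and morphisms.  [Z D] below is built on raw data; the predicates
    [pvob]/[pvhom] cut out exactly the zigzags and zigzag maps of the paper. *)
Record precat := Precat {
  pob : Type;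
  phom : pob -> pob -> Type;
  pvob : pob -> Prop;
  pvhom : forall a b, phom a b -> Prop;
  pcompose : forall a b c, phom b c -> phom a b -> phom a c;
  pid : forall a, phom a a }.
Arguments phom {p}. Arguments pvob {p}. Arguments pvhom {p a b}.
Arguments pcompose {p a b c}. Arguments pid {p}.

Definition precat_of (C : category) : precat :=
  @Precat (cob C) (@chom C) (fun _ => True) (fun _ _ _ => True) (@ccomp C) (@cid C).

Definition isoP (D : precat) (a b : pob D) (f : phom a b) : Prop :=
  pvhom f /\ exists g : phom b a, pvhom g /\ pcompose g f = pid a /\ pcompose f g = pid b.

Record prefunctor (D E : precat) := Prefunctor {
  fob : pob D -> pob E;
  fhom : forall a b, phom a b -> phom (fob a) (fob b) }.
Arguments fhom {D E} p {a b}.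

Definition hcast (D : precat) (a a' b b' : pob D) (ea : a = a') (eb : b = b')
  (f : phom a b) : phom a' b' :=
  match ea in _ = x, eb in _ = y return phom x y with erefl, erefl => f end.

Definition ordw {n} (i : 'I_n) : 'I_n.+1 := widen_ord (leqnSn n) i.
Definition ords {n} (i : 'I_n) : 'I_n.+1 := lift ord0 i.

Definition hatn (n m : nat) (psi : 'I_n -> 'I_m) (i : 'I_m.+1) : 'I_n.+1 :=
  inord (\big[minn/n]_(j < n | i <= psi j) (j : nat)).

Record zz (D : precat) := Zz {
  zlen : nat;
  zreg : 'I_zlen.+1 -> pob D;
  zsing : 'I_zlen -> pob D;
  zfwd : forall j : 'I_zlen, phom (zreg (ordw j)) (zsing j);
  zbwd : forall j : 'I_zlen, phom (zreg (ords j)) (zsing j) }.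
Arguments zlen {D} z. Arguments zreg {D} z i. Arguments zsing {D} z j.
Arguments zfwd {D} z j. Arguments zbwd {D} z j.

Definition zvob (D : precat) (X : zz D) : Prop :=
  [/\ (forall i, pvob (zreg X i)), (forall j, pvob (zsing X j)),
      (forall j, pvhom (zfwd X j)) & (forall j, pvhom (zbwd X j))].

(** Raw data of a zigzag map: f_s, hat f_s, regular and singular slices *)
Record zzmap (D : precat) (X Y : zz D) := Zzmap {
  mfs : 'I_(zlen X) -> 'I_(zlen Y);
  mfh : 'I_(zlen Y).+1 -> 'I_(zlen X).+1;
  mreg : forall i, phom (zreg X (mfh i)) (zreg Y i);
  msing : forall j, phom (zsing X j) (zsing Y (mfs j)) }.
Arguments mfs {D X Y} z j. Arguments mfh {D X Y} z i.
Arguments mreg {D X Y} z i. Arguments msing {D X Y} z j.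

Definition monotone (n m : nat) (u : 'I_n -> 'I_m) : Prop :=
  forall j j' : 'I_n, j <= j' -> u j <= u j'.

Definition zzvalid (D : precat) (X Y : zz D) (f : zzmap X Y) : Prop :=
  monotone (mfs f) /\
  (forall i, mfh f i = hatn (mfs f) i) /\
  (forall i, pvhom (mreg f i)) /\ (forall j, pvhom (msing f j)) /\
  (forall (i : 'I_(zlen Y)) (p : 'I_(zlen X)) (e : mfs f p = i),
     (forall j, mfs f j = i -> p <= j) ->
     forall e' : mfh f (ordw i) = ordw p,
     pcompose (hcast erefl (congr1 (zsing Y) e) (msing f p)) (zfwd X p)
     = pcompose (zfwd Y i) (hcast (congr1 (zreg X) e') erefl (mreg f (ordw i)))) /\
  (forall (i : 'I_(zlen Y)) (q : 'I_(zlen X)) (e : mfs f q = i),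
     (forall j, mfs f j = i -> j <= q) ->
     forall e' : mfh f (ords i) = ords q,
     pcompose (hcast erefl (congr1 (zsing Y) e) (msing f q)) (zbwd X q)
     = pcompose (zbwd Y i) (hcast (congr1 (zreg X) e') erefl (mreg f (ords i)))) /\
  (* consecutive j, j+1 in the same fibre *)
  (forall (j j' : 'I_(zlen X)) (e : mfs f j' = mfs f j) (e' : ordw j' = ords j),
     pcompose (msing f j) (zbwd X j)
     = pcompose (hcast erefl (congr1 (zsing Y) e) (msing f j'))
             (hcast (congr1 (zreg X) e') erefl (zfwd X j'))) /\
  (forall i : 'I_(zlen Y), (forall j, mfs f j != i) ->
     forall e : mfh f (ords i) = mfh f (ordw i),
     pcompose (zfwd Y i) (mreg f (ordw i))
     = pcompose (zbwd Y i) (hcast (congr1 (zreg X) e) erefl (mreg f (ords i)))).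

Definition zcomp (D : precat) (X Y W : zz D) (g : zzmap Y W) (f : zzmap X Y)
  : zzmap X W :=
  {| mfs := fun j => mfs g (mfs f j);
     mfh := fun i => mfh f (mfh g i);
     mreg := fun i => pcompose (mreg g i) (mreg f (mfh g i));
     msing := fun j => pcompose (msing g (mfs f j)) (msing f j) |}.

Definition zid (D : precat) (X : zz D) : zzmap X X :=
  {| mfs := id; mfh := id; mreg := fun i => pid _; msing := fun j => pid _ |}.

Definition Zpre (D : precat) : precat :=
  @Precat (zz D) (@zzmap D) (@zvob D) (@zzvalid D) (@zcomp D) (@zid D).

Fixpoint Zn (n : nat) (D : precat) : precat :=
  match n with 0 => D | n'.+1 => Zpre (Zn n' D) end.

Definition zfob (D E : precat) (F : prefunctor D E) (X : zz D) : zz E :=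
  {| zlen := zlen X;
     zreg := fun i => fob F (zreg X i);
     zsing := fun j => fob F (zsing X j);
     zfwd := fun j => fhom F (zfwd X j);
     zbwd := fun j => fhom F (zbwd X j) |}.

Definition zfhom (D E : precat) (F : prefunctor D E) (X Y : zz D) (f : zzmap X Y)
  : zzmap (zfob F X) (zfob F Y) :=
  @Zzmap E (zfob F X) (zfob F Y) (mfs f) (mfh f)
     (fun i => fhom F (mreg f i)) (fun j => fhom F (msing f j)).

Definition Zfun (D E : precat) (F : prefunctor D E) : prefunctor (Zpre D) (Zpre E) :=
  @Prefunctor (Zpre D) (Zpre E) (@zfob D E F) (@zfhom D E F).

Fixpoint Znf (n : nat) (D E : precat) (F : prefunctor D E)
  : prefunctor (Zn n D) (Zn n E) :=
  match n return prefunctor (Zn n D) (Zn n E) with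
  | 0 => F
  | n'.+1 => Zfun (Znf n' F)
  end.

Definition termcat : category.
Proof.
refine (@Category unit (fun _ _ => unit) (fun _ _ _ _ _ => tt) (fun _ => tt) _ _ _).
- by [].
- by move=> a b []. 
- by move=> a b [].
Defined.

Definition to_term (C : category) : prefunctor (precat_of C) (precat_of termcat) :=
  @Prefunctor (precat_of C) (precat_of termcat) (fun _ => tt) (fun _ _ _ => tt).

Definition vertical (D : precat) (X Y : zz D) (f : zzmap X Y) : Prop :=
  zlen X = zlen Y /\ forall j, nat_of_ord (mfs f j) = nat_of_ord j.

(** pi-cocartesian maps for pi : Z(D) -> Delta_+ *)
Definition cocartesian (D : precat) (X Y : zz D) (f : zzmap X Y) : Prop :=
  forall (Y' : zz D) (h : zzmap X Y') (u : 'I_(zlen Y) -> 'I_(zlen Y')),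
    zvob Y' -> zzvalid h -> monotone u -> (forall j, u (mfs f j) = mfs h j) ->
    exists v : zzmap Y Y',
      (zzvalid v /\ zcomp v f = h /\ mfs v =1 u) /\
      (forall v' : zzmap Y Y', zzvalid v' -> zcomp v' f = h -> mfs v' =1 u -> v' = v).

Inductive degZ (D : precat) (P : forall a b : pob D, phom a b -> Prop)
  : forall X Y : zz D, zzmap X Y -> Prop :=
| degZ_simple X Y (f : zzmap X Y) :
    zvob X -> zvob Y -> zzvalid f -> cocartesian f -> injective (mfs f) ->
    degZ P f
| degZ_par X Y (f : zzmap X Y) :
    zvob X -> zvob Y -> zzvalid f -> vertical f ->
    (forall i, P _ _ (mreg f i)) -> (forall j, P _ _ (msing f j)) ->
    degZ P f
| degZ_comp X Y W (f : zzmap X Y) (g : zzmap Y W) :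
    degZ P f -> degZ P g -> degZ P (zcomp g f).

Fixpoint isdeg (D : precat) (n : nat) : forall a b : pob (Zn n D), phom a b -> Prop :=
  match n return forall a b : pob (Zn n D), phom a b -> Prop with
  | 0 => fun a b f => isoP f
  | n'.+1 => @degZ (Zn n' D) (@isdeg D n')
  end.

(* Main.v *)
Require Import Defs.
From mathcomp Require Import all_boot.
From Stdlib Require Import FunctionalExtensionality ProofIrrelevance Eqdep ClassicalEpsilon.
Set Implicit Arguments. Unset Strict Implicit. Unset Printing Implicit Defensive.

Lemma bigmin_le_mem (I : eqType) (r : seq I) (P : pred I) (F : I -> nat) k idx :
  k \in r -> P k -> \big[minn/idx]_(j <- r | P j) F j <= F k.
Proof.
elim: r => // a r IH; rewrite inE big_cons => /orP [/eqP <-|Hk] Pk.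
  by rewrite Pk geq_minl.
case: (P a); last exact: IH.
by rewrite geq_min IH ?orbT.
Qed.

Section Hat.
Variables n m : nat.

Lemma hatn_val (psi : 'I_n -> 'I_m) (i : 'I_m.+1) :
  nat_of_ord (hatn psi i) = \big[minn/n]_(j < n | i <= psi j) (j : nat).
Proof.
rewrite /hatn inordK // ltnS.
by elim/big_rec: _ => // j x _ Hx; rewrite geq_min Hx orbT.
Qed.

Lemma hatn_le (psi : 'I_n -> 'I_m) (mo : monotone psi) (i : 'I_m.+1) (k : 'I_n) :
  (hatn psi i <= k) = (i <= psi k).
Proof.
rewrite hatn_val; apply/idP/idP => [H|H]; last first.
  by apply: (@bigmin_le_mem _ _ _ (fun j : 'I_n => (j : nat))) => //; rewrite mem_index_enum.
have : \big[minn/n]_(j < n | i <= psi j) (j : nat) = n \/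
       exists j : 'I_n, i <= psi j /\ \big[minn/n]_(j < n | i <= psi j) (j : nat) = j.
  elim/big_rec: _ => [|j x Hj [->|[j' [H1 ->]]]]; first by left.
  - by right; exists j; split => //; apply/minn_idPl; apply: ltnW.
  - right; case: (leqP j j') => Hl.
    + by exists j; split => //; apply/minn_idPl.
    + by exists j'; split => //; apply/minn_idPr; apply: ltnW.
case=> [E|[j [H1 E]]]; first by move: H; rewrite E leqNgt ltn_ord.
rewrite E in H; apply: leq_trans H1 _; exact: mo.
Qed.

Lemma hatn_unique (psi : 'I_n -> 'I_m) (mo : monotone psi) (i : 'I_m.+1) (h : 'I_n.+1) :
  (forall k : 'I_n, (h <= k) = (i <= psi k)) -> h = hatn psi i.
Proof.
move=> Hh; apply/val_inj => /=.
case: (ltngtP h (hatn psi i)) => // Hlt.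
- have hn : h < n by apply: leq_trans Hlt _; rewrite -ltnS.
  have := Hh (Ordinal hn); rewrite leqnn => /esym.
  by rewrite -hatn_le // leqNgt /= Hlt.
- have hn : hatn psi i < n by apply: leq_trans Hlt _; rewrite -ltnS.
  have := hatn_le mo i (Ordinal hn); rewrite /= leqnn => /esym.
  by rewrite -Hh leqNgt /= Hlt.
Qed.
End Hat.

Lemma monotone_id n : monotone (fun j : 'I_n => j).
Proof. by []. Qed.

Lemma hatn_id n (i : 'I_n.+1) : hatn (fun j : 'I_n => j) i = i.
Proof. by symmetry; apply: hatn_unique => //. Qed.

Lemma monotone_comp n m p (f : 'I_n -> 'I_m) (g : 'I_m -> 'I_p) :
  monotone f -> monotone g -> monotone (fun j => g (f j)).
Proof. by move=> mf mg j j' H; apply: mg; apply: mf. Qed.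

Lemma hatn_comp n m p (f : 'I_n -> 'I_m) (g : 'I_m -> 'I_p) :
  monotone f -> monotone g -> forall i,
  hatn (fun j => g (f j)) i = hatn f (hatn g i).
Proof.
move=> mf mg i; symmetry; apply: hatn_unique; first exact: monotone_comp.
by move=> k; rewrite hatn_le // hatn_le.
Qed.

Lemma hat_first n m (psi : 'I_n -> 'I_m) (mo : monotone psi) (p : 'I_n) :
  (forall j, psi j = psi p -> p <= j) -> hatn psi (ordw (psi p)) = ordw p.
Proof.
move=> Hp; symmetry; apply: hatn_unique => // k /=.
apply/idP/idP => [H|H]; first exact: mo.
rewrite leqNgt; apply/negP => Hlt.
have : psi k <= psi p by apply: mo; apply: ltnW.
move=> H2; have E : psi k = psi p by apply/val_inj/eqP; rewrite eqn_leq H2 H.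
by move: (Hp _ E); rewrite leqNgt Hlt.
Qed.

Lemma hat_last n m (psi : 'I_n -> 'I_m) (mo : monotone psi) (q : 'I_n) :
  (forall j, psi j = psi q -> j <= q) -> hatn psi (ords (psi q)) = ords q.
Proof.
move=> Hq; symmetry; apply: hatn_unique => // k /=.
apply/idP/idP => [H|H].
- have H1 : psi q <= psi k by apply: mo; apply: ltnW.
  rewrite ltn_neqAle H1 andbT; apply/negP => /eqP E.
  have : k <= q by apply: Hq; apply: val_inj.
  by rewrite leqNgt H.
- rewrite ltnNge; apply/negP => Hkq.
  have := mo _ _ Hkq; by rewrite leqNgt H.
Qed.

Lemma hat_empty n m (psi : 'I_n -> 'I_m) (mo : monotone psi) (i : 'I_m) :
  (forall j, psi j != i) -> hatn psi (ords i) = hatn psi (ordw i).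
Proof.
move=> Hi; apply: hatn_unique => // k; rewrite hatn_le //=.
rewrite [RHS]leq_eqVlt; case: eqP => //= E.
by move: (Hi k); rewrite -(inj_eq val_inj) /= E eqxx.
Qed.

Lemma hat_max n m (psi : 'I_n -> 'I_m) : hatn psi ord_max = ord_max.
Proof.
apply/val_inj => /=; rewrite hatn_val /=.
rewrite big_pred0 // => j; by rewrite leqNgt ltn_ord.
Qed.

Lemma ordwK n (i j : 'I_n) : ordw i = ordw j -> i = j.
Proof. by move=> /(congr1 val) /= E; apply: val_inj. Qed.
Lemma ordsK n (i j : 'I_n) : ords i = ords j -> i = j.
Proof. by move=> /(congr1 val) /= [] E; apply: val_inj. Qed.
Lemma ordws_neq n (i j : 'I_n) : ordw i = ords j -> (i : nat) = j.+1.
Proof. by move=> /(congr1 val). Qed.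

Record catlaws (D : precat) : Prop := CatLaws {
  cl_assoc : forall (a b c d : pob D) (h : phom c d) (g : phom b c) (f : phom a b),
      pcompose h (pcompose g f) = pcompose (pcompose h g) f;
  cl_idl : forall (a b : pob D) (f : phom a b), pcompose (pid b) f = f;
  cl_idr : forall (a b : pob D) (f : phom a b), pcompose f (pid a) = f;
  cl_idv : forall a : pob D, pvhom (pid a);
  cl_compv : forall (a b c : pob D) (g : phom b c) (f : phom a b),
      pvhom g -> pvhom f -> pvhom (pcompose g f) }.

Lemma catlaws_base (C : category) : catlaws (precat_of C).
Proof.
split => //=.
- exact: ccompA.
- exact: ccomp1l.
- exact: ccomp1r.
Qed.

Lemma hcast_valid (D : precat) (a a' b b' : pob D) (ea : a = a') (eb : b = b') (f : phom a b) :
  pvhom f -> pvhom (hcast ea eb f).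
Proof. by case: a' / ea; case: b' / eb. Qed.

Lemma hcast_id (D : precat) (a b : pob D) (ea : a = a) (eb : b = b) (f : phom a b) :
  ea = erefl -> eb = erefl -> hcast ea eb f = f.
Proof. by move=> -> ->. Qed.

Lemma zzmap_eq (D : precat) (X Y : zz D) fs fh r r' s s' :
  (forall i, r i = r' i) -> (forall j, s j = s' j) ->
  @Zzmap D X Y fs fh r s = @Zzmap D X Y fs fh r' s'.
Proof.
move=> Hr Hs.
have -> : r = r' by apply: functional_extensionality_dep.
have -> : s = s' by apply: functional_extensionality_dep.
by [].
Qed.

Lemma zzmap_inj (D : precat) (X Y : zz D) fs fh r r' s s' :
  @Zzmap D X Y fs fh r s = @Zzmap D X Y fs fh r' s' ->
  (forall i, r i = r' i) /\ (forall j, s j = s' j).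
Proof.
move=> E; injection E => Es Er.
have E1 := inj_pair2 _ _ _ _ _ Er.
have E2 := inj_pair2 _ _ _ _ _ Es.
by rewrite E1 E2.
Qed.

Section ZLaws.
Variable D : precat.
Hypothesis HD : catlaws D.

Lemma zassoc (X Y W V : zz D) (h : zzmap W V) (g : zzmap Y W) (f : zzmap X Y) :
  zcomp h (zcomp g f) = zcomp (zcomp h g) f.
Proof. by apply: zzmap_eq => * /=; rewrite (cl_assoc HD). Qed.

Lemma zidl (X Y : zz D) (f : zzmap X Y) : zcomp (zid Y) f = f.
Proof. by case: f => fs fh r s; apply: zzmap_eq => * /=; rewrite (cl_idl HD). Qed.

Lemma zidr (X Y : zz D) (f : zzmap X Y) : zcomp f (zid X) = f.
Proof. by case: f => fs fh r s; apply: zzmap_eq => * /=; rewrite (cl_idr HD). Qed.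

Lemma zid_valid (X : zz D) : zzvalid (zid X).
Proof.
split; first exact: monotone_id.
split; first by move=> i; rewrite hatn_id.
split; first by move=> i; exact: (cl_idv HD).
split; first by move=> j; exact: (cl_idv HD).
split.
  move=> i p /= e _; case: i / e => e'.
  by rewrite (eq_irrelevance e' erefl) /= (cl_idl HD) (cl_idr HD).
split.
  move=> i p /= e _; case: i / e => e'.
  by rewrite (eq_irrelevance e' erefl) /= (cl_idl HD) (cl_idr HD).
split.
  move=> j j' /= e; case: j / e => e'.
  by move: (ordws_neq e') => /eqP; rewrite -[X in X == _]addn0 -addn1 eqn_add2l.
move=> i H; by move: (H i); rewrite eqxx.
Qed.
End ZLaws.

Section Casts.
Variable D : precat.

Lemma hcast_comp (a a' b c c' : pob D) (ea : a = a') (ec : c = c') (g : phom b c) (f : phom a b) :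
  pcompose (hcast erefl ec g) (hcast ea erefl f) = hcast ea ec (pcompose g f).
Proof. by case: a' / ea; case: c' / ec. Qed.

Lemma hcast_compl (a b c c' : pob D) (ec : c = c') (g : phom b c) (f : phom a b) :
  pcompose (hcast erefl ec g) f = hcast erefl ec (pcompose g f).
Proof. by case: c' / ec. Qed.

Lemma hcast_compr (a a' b c : pob D) (ea : a = a') (g : phom b c) (f : phom a b) :
  pcompose g (hcast ea erefl f) = hcast ea erefl (pcompose g f).
Proof. by case: a' / ea. Qed.

Variables (I J : Type) (A : I -> pob D) (B : J -> pob D).
Definition sarr := {k : I & {i : J & phom (A k) (B i)}}.
Definition smk k i (a : phom (A k) (B i)) : sarr := existT _ k (existT _ i a).

Lemma smk_cast k k' i i' (ek : k = k') (ei : i = i') (a : phom (A k) (B i)) :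
  smk (hcast (congr1 A ek) (congr1 B ei) a) = smk a.
Proof. by case: k' / ek; case: i' / ei. Qed.

Lemma smk_inj k i (a b : phom (A k) (B i)) : smk a = smk b -> a = b.
Proof.
move=> E; have E1 := inj_pair2 _ _ _ _ _ E.
exact: (inj_pair2 _ _ _ _ _ E1).
Qed.

Lemma smk_eq_cast k k' i i' (a : phom (A k) (B i)) (b : phom (A k') (B i')) :
  smk a = smk b -> forall (ek : k = k') (ei : i = i'),
  hcast (congr1 A ek) (congr1 B ei) a = b.
Proof. by move=> E ek ei; apply: smk_inj; rewrite smk_cast. Qed.

Lemma smk_idx k k' i i' (a : phom (A k) (B i)) (b : phom (A k') (B i')) :
  smk a = smk b -> k = k' /\ i = i'.
Proof. move=> E; split; first exact: (congr1 (@projT1 _ _) E).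
by have := congr1 (fun u => projT1 (projT2 u)) E.
Qed.
End Casts.
Arguments smk {D I J A B k i}.

Section SValid.
Variable D : precat.
Hypothesis HD : catlaws D.

Definition Arr (X Y : zz D) := sarr (zreg X) (zsing Y).
Definition mk (X Y : zz D) k i (a : phom (zreg X k) (zsing Y i)) : Arr X Y :=
  @smk D _ _ (zreg X) (zsing Y) k i a.
Arguments mk {X Y} k i a.

Definition postS (X Y W : zz D) (g : zzmap Y W) (u : Arr X Y) : Arr X W :=
  let: existT k (existT i a) := u in mk k (mfs g i) (pcompose (msing g i) a).
Definition preR (X Y W : zz D) (f : zzmap X Y) (u : Arr Y W) : Arr X W :=
  let: existT k (existT i a) := u in mk (mfh f k) i (pcompose a (mreg f k)).

Lemma mk_cast (X Y : zz D) k k' i i' (ek : k = k') (ei : i = i') (a : phom (zreg X k) (zsing Y i)) :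
  mk k' i' (hcast (congr1 (zreg X) ek) (congr1 (zsing Y) ei) a) = mk k i a.
Proof. exact: smk_cast. Qed.

Lemma mk_inj (X Y : zz D) k i (a b : phom (zreg X k) (zsing Y i)) : mk k i a = mk k i b -> a = b.
Proof. exact: smk_inj. Qed.

Variables X Y : zz D.
Implicit Type f : zzmap X Y.

Definition V1 f := forall p : 'I_(zlen X), (forall j, mfs f j = mfs f p -> p <= j) ->
  mk (ordw p) (mfs f p) (pcompose (msing f p) (zfwd X p)) =
  mk (mfh f (ordw (mfs f p))) (mfs f p) (pcompose (zfwd Y (mfs f p)) (mreg f (ordw (mfs f p)))).
Definition V2 f := forall q : 'I_(zlen X), (forall j, mfs f j = mfs f q -> j <= q) ->
  mk (ords q) (mfs f q) (pcompose (msing f q) (zbwd X q)) =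
  mk (mfh f (ords (mfs f q))) (mfs f q) (pcompose (zbwd Y (mfs f q)) (mreg f (ords (mfs f q)))).
Definition V3 f := forall j j' : 'I_(zlen X), (j' : nat) = j.+1 -> mfs f j' = mfs f j ->
  mk (ords j) (mfs f j) (pcompose (msing f j) (zbwd X j)) =
  mk (ordw j') (mfs f j') (pcompose (msing f j') (zfwd X j')).
Definition V4 f := forall i : 'I_(zlen Y), (forall j, mfs f j != i) ->
  mk (mfh f (ordw i)) i (pcompose (zfwd Y i) (mreg f (ordw i))) =
  mk (mfh f (ords i)) i (pcompose (zbwd Y i) (mreg f (ords i))).

Definition svalid f := [/\ monotone (mfs f), (forall i, mfh f i = hatn (mfs f) i),
  (forall i, pvhom (mreg f i)), (forall j, pvhom (msing f j)) &
  [/\ V1 f, V2 f, V3 f & V4 f]].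

Lemma valid_svalid f : zzvalid f -> svalid f.
Proof.
case=> mo [hf [vr [vs [c1 [c2 [c3 c4]]]]]].
split => //; split.
- move=> p Hp.
  have e' : mfh f (ordw (mfs f p)) = ordw p by rewrite hf hat_first.
  have := c1 (mfs f p) p erefl Hp e'; rewrite /= => ->.
  rewrite hcast_compr -(mk_cast e' (erefl (mfs f p))) /=.
  done.
- move=> q Hq.
  have e' : mfh f (ords (mfs f q)) = ords q by rewrite hf hat_last.
  have := c2 (mfs f q) q erefl Hq e'; rewrite /= => ->.
  by rewrite hcast_compr -(mk_cast e' (erefl (mfs f q))) /=.
- move=> j j' Hjj' e.
  have e' : ordw j' = ords j by apply: val_inj.
  have := c3 j j' e e' => ->.
  by rewrite hcast_comp mk_cast.
- move=> i Hi.
  have e : mfh f (ords i) = mfh f (ordw i) by rewrite !hf hat_empty.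
  have := c4 i Hi e => ->.
  by rewrite hcast_compr (mk_cast e (erefl i)).
Qed.

Lemma svalid_valid f : svalid f -> zzvalid f.
Proof.
case=> mo hf vr vs [c1 c2 c3 c4].
split => //; split => //; split => //; split => //; split.
  move=> i p e; case: i / e => Hp e'.
  have := c1 p Hp; rewrite -(mk_cast e' (erefl (mfs f p))) => /mk_inj ->.
  by rewrite hcast_compr.
split.
  move=> i q e; case: i / e => Hq e'.
  have := c2 q Hq; rewrite -(mk_cast e' (erefl (mfs f q))) => /mk_inj ->.
  by rewrite hcast_compr.
split.
  move=> j j' e e'.
  have Hjj' : (j' : nat) = j.+1 by have := congr1 val e'.
  have := c3 j j' Hjj' e; rewrite -(mk_cast e' e) => /mk_inj ->.
  by rewrite hcast_comp.
move=> i Hi e.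
have := c4 i Hi; rewrite -(mk_cast e (erefl i)) => /mk_inj ->.
by rewrite hcast_compr.
Qed.
End SValid.

Arguments mk {D X Y} k i a.

Section Comp.
Variable D : precat.
Hypothesis HD : catlaws D.
Variables X Y W : zz D.
Variables (f : zzmap X Y) (g : zzmap Y W).
Hypotheses (Hf : svalid f) (Hg : svalid g).

Let psi := mfs f.
Let chi := mfs g.
Let mof : monotone psi. Proof. by case: Hf. Qed.
Let mog : monotone chi. Proof. by case: Hg. Qed.

Definition cA (q : 'I_(zlen Y)) : Arr Y W := mk (ordw q) (chi q) (pcompose (msing g q) (zfwd Y q)).
Definition cB (q : 'I_(zlen Y)) : Arr Y W := mk (ords q) (chi q) (pcompose (msing g q) (zbwd Y q)).
Definition cEA (i : 'I_(zlen W)) : Arr Y W := mk (mfh g (ordw i)) i (pcompose (zfwd W i) (mreg g (ordw i))).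
Definition cEB (i : 'I_(zlen W)) : Arr Y W := mk (mfh g (ords i)) i (pcompose (zbwd W i) (mreg g (ords i))).

Lemma preR_postS k q (a : phom (zreg Y k) (zsing Y q)) :
  preR f (postS g (mk k q a)) = postS g (preR f (mk k q a)).
Proof. by rewrite /= (cl_assoc HD). Qed.

Lemma fa (q q' : 'I_(zlen Y)) : (q' : nat) = q.+1 -> chi q' = chi q -> cB q = cA q'.
Proof. by move=> H1 H2; case: Hg => _ _ _ _ [_ _ c3 _]; apply: c3. Qed.

Lemma fb (q : 'I_(zlen Y)) : (forall p, psi p != q) -> preR f (cA q) = preR f (cB q).
Proof.
move=> Hq; case: Hf => _ _ _ _ [_ _ _ c4].
have E := c4 q Hq.
rewrite -[cA q]/(postS g (mk (ordw q) q (zfwd Y q))) -[cB q]/(postS g (mk (ords q) q (zbwd Y q))).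
by rewrite !preR_postS; congr (postS g _); exact: E.
Qed.

Lemma fc (q : 'I_(zlen Y)) : (forall j, chi j = chi q -> q <= j) -> cA q = cEA (chi q).
Proof. by move=> H; case: Hg => _ _ _ _ [c1 _ _ _]; apply: c1. Qed.

Lemma fd (q : 'I_(zlen Y)) : (forall j, chi j = chi q -> j <= q) -> cB q = cEB (chi q).
Proof. by move=> H; case: Hg => _ _ _ _ [_ c2 _ _]; apply: c2. Qed.

Lemma fe (i : 'I_(zlen W)) : (forall j, chi j != i) -> cEA i = cEB i.
Proof. by move=> H; case: Hg => _ _ _ _ [_ _ _ c4]; apply: c4. Qed.

Lemma ff (p : 'I_(zlen X)) : (forall j, psi j = psi p -> p <= j) ->
  mk (ordw p) (chi (psi p)) (pcompose (msing (zcomp g f) p) (zfwd X p)) = preR f (cA (psi p)).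
Proof.
move=> H; case: Hf => _ _ _ _ [c1 _ _ _].
rewrite -[cA _]/(postS g (mk (ordw (psi p)) (psi p) (zfwd Y (psi p)))) preR_postS.
rewrite -[preR f _]/(mk _ _ _) -(c1 p H) /= (cl_assoc HD) //.
Qed.

Lemma fg (p : 'I_(zlen X)) : (forall j, psi j = psi p -> j <= p) ->
  mk (ords p) (chi (psi p)) (pcompose (msing (zcomp g f) p) (zbwd X p)) = preR f (cB (psi p)).
Proof.
move=> H; case: Hf => _ _ _ _ [_ c2 _ _].
rewrite -[cB _]/(postS g (mk (ords (psi p)) (psi p) (zbwd Y (psi p)))) preR_postS.
rewrite -[preR f _]/(mk _ _ _) -(c2 p H) /= (cl_assoc HD) //.
Qed.

Lemma chi_between (j q1 q : 'I_(zlen Y)) : chi j = chi q -> j <= q1 -> q1 <= q -> chi q1 = chi q.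
Proof.
move=> E H1 H2; apply/val_inj/eqP; rewrite eqn_leq (mog H2) /=.
by rewrite -E; apply: mog.
Qed.

Lemma Lfirst n (q : 'I_(zlen Y)) : (q : nat) = n ->
  (forall q' : 'I_(zlen Y), chi q' = chi q -> q' < q -> forall p, psi p != q') ->
  preR f (cA q) = preR f (cEA (chi q)).
Proof.
elim: n q => [|n IH] q Hqn Hq.
  by rewrite fc // => j _; rewrite Hqn.
case: (boolP [exists j, (chi j == chi q) && (j < q)]) => [/existsP [j /andP [/eqP Ej Hj]]|Hn]; last first.
  rewrite fc // => j Ej; rewrite leqNgt; apply/negP => Hj.
  by move/existsP: Hn; apply; exists j; rewrite Ej eqxx.
have Hq1 : n < zlen Y by apply: leq_ltn_trans _ (ltn_ord q); rewrite Hqn.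
pose q1 := Ordinal Hq1.
have E1 : chi q1 = chi q.
  by apply: (chi_between Ej) => /=; [rewrite -ltnS -Hqn | rewrite Hqn].
rewrite -(fa (q := q1) (q' := q)) //.
rewrite -fb; last by apply: Hq => //=; rewrite Hqn.
rewrite -E1; apply: IH => // q' Eq' Hq'; apply: Hq; first by rewrite Eq'.
by apply: ltn_trans Hq' _; rewrite Hqn.
Qed.

Lemma Llast n (q : 'I_(zlen Y)) : zlen Y - q = n ->
  (forall q' : 'I_(zlen Y), chi q' = chi q -> q < q' -> forall p, psi p != q') ->
  preR f (cB q) = preR f (cEB (chi q)).
Proof.
elim: n q => [|n IH] q Hqn Hq.
  by move: (ltn_ord q); rewrite -subn_gt0 Hqn.
case: (boolP [exists j, (chi j == chi q) && (q < j)]) => [/existsP [j /andP [/eqP Ej Hj]]|Hn]; last first.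
  rewrite fd // => j Ej; rewrite leqNgt; apply/negP => Hj.
  by move/existsP: Hn; apply; exists j; rewrite Ej eqxx.
have Hq1 : q.+1 < zlen Y by apply: leq_ltn_trans Hj (ltn_ord j).
pose q1 := Ordinal Hq1.
have E1 : chi q1 = chi q.
  apply/val_inj/eqP; rewrite eqn_leq (@mog q q1 (leqnSn q)) andbT.
  by rewrite -Ej; apply: mog.
rewrite (fa (q := q) (q' := q1)) //.
rewrite fb; last by apply: Hq => //=; rewrite E1.
rewrite -E1; apply: IH; first by rewrite /= subnS Hqn.
move=> q' Eq' Hq'; apply: Hq; first by rewrite Eq'.
by apply: ltn_trans Hq'.
Qed.

Lemma Lmid n (q1 q2 : 'I_(zlen Y)) : (q2 : nat) = n -> q1 < q2 -> chi q1 = chi q2 ->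
  (forall q' : 'I_(zlen Y), q1 < q' < q2 -> forall p, psi p != q') ->
  preR f (cB q1) = preR f (cA q2).
Proof.
elim: n q2 => [|n IH] q2 Hqn H12 E12 Hq; first by rewrite Hqn in H12.
have Hq3 : n < zlen Y by apply: leq_ltn_trans _ (ltn_ord q2); rewrite Hqn.
pose q3 := Ordinal Hq3.
case: (ltngtP q1 n) => H13; last first.
- by rewrite (fa (q := q1) (q' := q2)) // Hqn -H13.
- by move: H12; rewrite Hqn ltnS leqNgt H13.
have E3 : chi q3 = chi q2 by apply: (chi_between (j := q1)) => //=; [exact: ltnW|rewrite Hqn].
rewrite -(fa (q := q3) (q' := q2)) //.
rewrite -(fb (q := q3)); last by apply: Hq; apply/andP; split => //=; rewrite Hqn.
apply: IH => //; first by rewrite E3.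
move=> q' /andP [H1 H2]; apply: Hq; rewrite H1 /=.
by apply: ltn_trans H2 _; rewrite /= Hqn.
Qed.

Lemma comp_svalid : svalid (zcomp g f).
Proof.
have Hf' := Hf; have Hg' := Hg.
case: Hf' => _ hf vrf vsf [c1f c2f c3f c4f].
case: Hg' => _ hg vrg vsg [c1g c2g c3g c4g].
split.
- exact: monotone_comp.
- by move=> i /=; rewrite hg hf (hatn_comp mof mog).
- by move=> i /=; apply: (cl_compv HD).
- by move=> j /=; apply: (cl_compv HD).
split.
- move=> p Hp.
  have Hp1 : forall j, psi j = psi p -> p <= j.
    by move=> j Ej; apply: Hp => /=; rewrite -/psi Ej.
  rewrite ff // (Lfirst (erefl _)); last first.
    move=> q' Eq' Hq' p'; apply/negP => /eqP Ep'.
    have : p <= p' by apply: Hp => /=; rewrite -/psi -/chi Ep' Eq'.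
    move=> /mof; rewrite -/psi Ep' leqNgt => /negP; exact.
  by rewrite /= (cl_assoc HD).
- move=> p Hp.
  have Hp1 : forall j, psi j = psi p -> j <= p.
    by move=> j Ej; apply: Hp => /=; rewrite -/psi Ej.
  rewrite fg // (Llast (erefl _)); last first.
    move=> q' Eq' Hq' p'; apply/negP => /eqP Ep'.
    have : p' <= p by apply: Hp => /=; rewrite -/psi -/chi Ep' Eq'.
    move=> /mof; rewrite -/psi Ep' leqNgt => /negP; exact.
  by rewrite /= (cl_assoc HD).
- move=> j j' Hjj' E.
  case: (eqVneq (psi j') (psi j)) => Epsi.
    have := congr1 (postS g) (c3f j j' Hjj' Epsi).
    by rewrite /= -!(cl_assoc HD).
  have Hlt : psi j < psi j'.
    rewrite ltn_neqAle (mof (j := j) (j' := j')); last by rewrite Hjj'.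
    by rewrite andbT eq_sym (inj_eq val_inj).
  have Hlast : forall j2, psi j2 = psi j -> j2 <= j.
    move=> j2 E2; rewrite leqNgt; apply/negP => H2.
    have : psi j' <= psi j2 by apply: mof; rewrite Hjj'.
    by rewrite E2 leqNgt Hlt.
  have Hfirst : forall j2, psi j2 = psi j' -> j' <= j2.
    move=> j2 E2; rewrite leqNgt; apply/negP => H2.
    have : psi j2 <= psi j by apply: mof; rewrite -ltnS -Hjj'.
    by rewrite E2 leqNgt Hlt.
  rewrite fg // (ff Hfirst).
  apply: (Lmid (erefl _)) => //.
  move=> q' /andP [H1 H2] p; apply/negP => /eqP Ep.
  case: (leqP p j) => Hpj.
    by move: (mof Hpj); rewrite -/psi Ep leqNgt H1.
  have : j' <= p by rewrite Hjj'.
  by move=> /mof; rewrite -/psi Ep leqNgt H2.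
- move=> i Hi.
  rewrite -[mk _ _ (pcompose _ (mreg (zcomp g f) (ordw i)))]/(mk _ _ _).
  transitivity (preR f (cEA i)); first by rewrite /= (cl_assoc HD).
  transitivity (preR f (cEB i)); last by rewrite /= (cl_assoc HD).
  case: (boolP [exists q, chi q == i]) => [/existsP [q /eqP Eq]|Hn]; last first.
    by rewrite fe // => j; apply/negP => Ej; move/existsP: Hn; apply; exists j.
  have Hq : forall q' : 'I_(zlen Y), chi q' = chi q -> forall p, psi p != q'.
    move=> q' Eq' p; apply/negP => /eqP Ep; move: (Hi p).
    by rewrite /= -/psi -/chi Ep Eq' Eq eqxx.
  rewrite -Eq -(Lfirst (erefl _)); last by move=> q' Eq' _; apply: Hq.
  rewrite fb; last by apply: Hq.
  by rewrite (Llast (erefl _)) // => q' Eq' _; apply: Hq.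
Qed.
End Comp.

Lemma comp_valid (D : precat) (HD : catlaws D) (X Y W : zz D) (f : zzmap X Y) (g : zzmap Y W) :
  zzvalid f -> zzvalid g -> zzvalid (zcomp g f).
Proof.
move=> /valid_svalid Hf /valid_svalid Hg; apply: svalid_valid; exact: comp_svalid.
Qed.

Lemma catlaws_Z (D : precat) : catlaws D -> catlaws (Zpre D).
Proof.
move=> HD; split.
- move=> *; exact: zassoc.
- move=> *; exact: zidl.
- move=> *; exact: zidr.
- move=> a; exact: zid_valid.
- move=> a b c g f Hg Hf; exact: (comp_valid HD Hf Hg).
Qed.

Lemma catlaws_Zn (C : category) n : catlaws (Zn n (precat_of C)).
Proof. elim: n => [|n IH]; [exact: catlaws_base | exact: catlaws_Z]. Qed.

Arguments mk {D X Y} k i a.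

Record degax (D : precat) (P : forall a b : pob D, phom a b -> Prop) : Prop := DegAx {
  dg_valid : forall (a b : pob D) (f : phom a b), P a b f -> pvhom f;
  dg_iso : forall (a b : pob D) (f : phom a b), pvob a -> pvob b -> isoP f -> P a b f;
  dg_comp : forall (a b c : pob D) (g : phom b c) (f : phom a b),
     P a b f -> P b c g -> P a c (pcompose g f);
  dg_mono : forall (a b : pob D) (f : phom a b), P a b f ->
     forall (c : pob D) (u v : phom c a), pcompose f u = pcompose f v -> u = v }.

Lemma degax_base (C : category) : degax (@isdeg (precat_of C) 0).
Proof.
split => /=.
- by [].
- by [].
- move=> a b c g f [_ [f' [_ [/= f1 f2]]]] [_ [g' [_ [/= g1 g2]]]]; split => //.
  exists (ccomp f' g'); split => //; split => /=.
  + by rewrite -ccompA (ccompA g') g1 ccomp1l f1.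
  + by rewrite -ccompA (ccompA f) f2 ccomp1l g2.
- move=> a b f [_ [f' [_ [/= f1 f2]]]] c u v /= E.
  by rewrite -(ccomp1l u) -(ccomp1l v) -f1 -!ccompA E.
Qed.

Lemma P_mk (D : precat) (P : forall a b : pob D, phom a b -> Prop) (X Y : zz D) k k' i i'
  (a : phom (zreg X k) (zsing Y i)) (b : phom (zreg X k') (zsing Y i')) :
  mk k i a = mk k' i' b -> P _ _ a -> P _ _ b.
Proof.
move=> E; case: (smk_idx E) => ek ei; move: b E; case: k' / ek; case: i' / ei => b E.
by rewrite (mk_inj E).
Qed.

Lemma hat_surj n m (psi : 'I_n -> 'I_m) : monotone psi -> injective psi ->
  forall k : 'I_n.+1, exists i, hatn psi i = k.
Proof.
move=> mo inj k; case: (ltnP k n) => Hk.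
  exists (ordw (psi (Ordinal Hk))); rewrite hat_first //; first by apply: val_inj.
  by move=> j /inj ->.
exists ord_max; rewrite hat_max; apply: val_inj => /=.
by apply/eqP; rewrite eqn_leq Hk -ltnS ltn_ord.
Qed.

Section DegZ.
Variable D : precat.
Hypothesis HD : catlaws D.
Variable P : forall a b : pob D, phom a b -> Prop.
Hypothesis HP : degax P.

Definition Good (X T : zz D) (f : zzmap X T) :=
  [/\ zzvalid f, injective (mfs f), (forall i, P (mreg f i)), (forall j, P (msing f j)) &
      (forall i, (forall j, mfs f j != i) -> P (pcompose (zfwd T i) (mreg f (ordw i))))].

Lemma good_par (X Y : zz D) (f : zzmap X Y) : zzvalid f -> vertical f ->
  (forall i, P (mreg f i)) -> (forall j, P (msing f j)) -> Good f.
Proof.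
move=> Hv [el ev] Hr Hs; split => //.
- by move=> j1 j2 E; apply: val_inj => /=; rewrite -(ev j1) -(ev j2) E.
- move=> i Hi; exfalso.
  have Hi' : (i : nat) < zlen X by rewrite el.
  by move: (Hi (Ordinal Hi')); rewrite -(inj_eq val_inj) /= ev eqxx.
Qed.

Lemma good_comp (X Y W : zz D) (f : zzmap X Y) (g : zzmap Y W) :
  Good f -> Good g -> Good (zcomp g f).
Proof.
move=> [vf injf rf sf ef] [vg injg rg sg eg]; split.
- exact: comp_valid.
- by move=> j1 j2 /injg /injf.
- by move=> i /=; apply: (dg_comp HP).
- by move=> j /=; apply: (dg_comp HP).
move=> i Hi /=.
case: (boolP [exists q, mfs g q == i]) => [/existsP [q /eqP Eq]|Hn]; last first.
  rewrite (cl_assoc HD); apply: (dg_comp HP) => //; apply: eg.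
  by move=> j; apply/negP => Ej; move/existsP: Hn; apply; exists j.
case: i / Eq Hi => Hi.
have Hq : forall p, mfs f p != q.
  by move=> p; apply/negP => /eqP Ep; move: (Hi p) => /=; rewrite Ep eqxx.
case: (valid_svalid vg) => mog _ _ _ [c1 _ _ _].
have E : mk (mfh f (ordw q)) (mfs g q) (pcompose (pcompose (msing g q) (zfwd Y q)) (mreg f (ordw q)))
  = mk (mfh f (mfh g (ordw (mfs g q)))) (mfs g q)
       (pcompose (pcompose (zfwd W (mfs g q)) (mreg g (ordw (mfs g q)))) (mreg f (mfh g (ordw (mfs g q))))).
  exact: (congr1 (preR f) (c1 q (fun j Ej => eq_leq (f_equal val (esym (injg _ _ Ej)))))).
rewrite -!(cl_assoc HD) in E.
apply: (P_mk (P := P) E).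
apply: (dg_comp HP); [exact: ef | exact: sg].
Qed.

Lemma good_mono (X T : zz D) (f : zzmap X T) : Good f ->
  forall (W : zz D) (u v : zzmap W X), zcomp f u = zcomp f v -> u = v.
Proof.
move=> [vf injf rf sf _] W [us uh ur usg] [vs vh vr vsg] E.
case: (valid_svalid vf) => mof hf _ _ _.
have Es : us = vs.
  apply: functional_extensionality => j; apply: injf.
  by have := congr1 (fun z => mfs z j) E.
subst vs.
have surj := hat_surj mof injf.
have Eh : uh = vh.
  apply: functional_extensionality => k; case: (surj k) => i <-.
  by have := congr1 (fun z => mfh z i) E => /=; rewrite hf.
subst vh.
case: (zzmap_inj E) => /= Er Esg.
apply: zzmap_eq => [k|j].
- case: (surj k) => i <-; rewrite -hf.
  exact: (dg_mono HP (rf i) (Er i)).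
- exact: (dg_mono HP (sf (us j)) (Esg j)).
Qed.

Lemma strict_ge n m (psi : 'I_n -> 'I_m) : monotone psi -> injective psi ->
  forall j : 'I_n, (j : nat) <= psi j.
Proof.
move=> mo inj; case=> j Hj; elim: j Hj => // j IH Hj.
have Hj' : j < n by apply: ltnW.
have := IH Hj'; move=> H1.
have H2 : psi (Ordinal Hj') <= psi (Ordinal Hj) by apply: mo => /=.
have H3 : psi (Ordinal Hj') != psi (Ordinal Hj).
  by apply/negP => /eqP /inj /(congr1 val) /= /n_Sn.
by apply: leq_ltn_trans H1 _; rewrite ltn_neqAle H3 H2.
Qed.

Lemma iso_slices (X Y : zz D) (f : zzmap X Y) : @isoP (Zpre D) X Y f ->
  [/\ vertical f, forall i, isoP (mreg f i) & forall j, isoP (msing f j)].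
Proof.
move=> [vf [g [vg [E1 E2]]]].
case: (valid_svalid vf) => mof hf vrf vsf _.
case: (valid_svalid vg) => mog hg vrg vsg _.
have gf : forall j, mfs g (mfs f j) = j by move=> j; have := congr1 (fun z => mfs z j) E1.
have fg : forall i, mfs f (mfs g i) = i by move=> i; have := congr1 (fun z => mfs z i) E2.
have injf : injective (mfs f) by move=> j1 j2 E; rewrite -(gf j1) E gf.
have injg : injective (mfs g) by move=> j1 j2 E; rewrite -(fg j1) E fg.
have vf_eq : forall j, (mfs f j : nat) = j.
  move=> j; apply/eqP; rewrite eqn_leq strict_ge // andbT.
  by rewrite -{2}(gf j) strict_ge.
have vg_eq : forall i, (mfs g i : nat) = i.
  move=> i; apply/eqP; rewrite eqn_leq strict_ge // andbT.
  by rewrite -{2}(fg i) strict_ge.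
have el : zlen X = zlen Y.
  apply/eqP; rewrite eqn_leq; apply/andP; split.
  - case: (posnP (zlen X)) => [->//|Hp].
    have H : (zlen X).-1 < zlen X by rewrite prednK.
    by have := ltn_ord (mfs f (Ordinal H)); rewrite vf_eq /= prednK.
  - case: (posnP (zlen Y)) => [->//|Hp].
    have H : (zlen Y).-1 < zlen Y by rewrite prednK.
    by have := ltn_ord (mfs g (Ordinal H)); rewrite vg_eq /= prednK.
split => //.
- move=> i.
  have H2 := congr1 (fun z => existT (fun k => phom (zreg Y k) (zreg Y i)) (mfh z i) (mreg z i)) E2.
  have H1 := congr1 (fun z => existT (fun k => phom (zreg X k) (zreg X (mfh f i))) (mfh z (mfh f i)) (mreg z (mfh f i))) E1.
  have V := vrg (mfh f i).
  move: H1 H2 V => /=.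
  move: (mreg g (mfh f i)); move: (mfh g (mfh f i)) => k G H1 H2 V.
  have ek : k = i by have := congr1 (@projT1 _ _) H2.
  subst k.
  split => //; exists G; split => //; split.
  + exact: (inj_pair2 _ _ _ _ _ H1).
  + exact: (inj_pair2 _ _ _ _ _ H2).
- move=> j.
  have H1 := congr1 (fun z => existT (fun k => phom (zsing X j) (zsing X k)) (mfs z j) (msing z j)) E1.
  have H2 := congr1 (fun z => existT (fun k => phom (zsing Y (mfs f j)) (zsing Y k)) (mfs z (mfs f j)) (msing z (mfs f j))) E2.
  have V := vsg (mfs f j).
  move: H1 H2 V => /=.
  move: (msing g (mfs f j)); move: (mfs g (mfs f j)) => k G H1 H2 V.
  have ek : k = j by have := congr1 (@projT1 _ _) H1.
  subst k.
  split => //; exists G; split => //; split.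
  + exact: (inj_pair2 _ _ _ _ _ H1).
  + exact: (inj_pair2 _ _ _ _ _ H2).
Qed.
End DegZ.

Arguments mk {D X Y} k i a.

Lemma mk_eq_castk (D : precat) (X Y : zz D) k k' i (a : phom (zreg X k) (zsing Y i)) b :
  mk k i a = mk k' i b -> forall ek : k = k', hcast (congr1 (zreg X) ek) erefl a = b.
Proof. by move=> E ek; exact: (smk_eq_cast E ek erefl). Qed.

Lemma zzmap_eta (D : precat) (X Y : zz D) (f : zzmap X Y) :
  @Zzmap D X Y (mfs f) (mfh f) (mreg f) (msing f) = f.
Proof. by case: f. Qed.

Lemma neq_self_false (T : eqType) (x : T) : x != x -> False.
Proof. by rewrite eqxx. Qed.

Ltac uip := repeat match goal with
  | H : @eq _ ?x ?y |- _ => rewrite (eq_irrelevance H (erefl x)); clear H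
  end.

Section Simple.
Variable D : precat.
Hypothesis HD : catlaws D.
Variable P : forall a b : pob D, phom a b -> Prop.
Hypothesis HP : degax P.
Variables X T : zz D.
Variable f : zzmap X T.
Hypotheses (zX : zvob X) (zT : zvob T) (vf : zzvalid f) (cf : cocartesian f)
  (injf : injective (mfs f)).

Let psi := mfs f.
Let fh := mfh f.
Let M := zlen T.
Let mof : monotone psi. Proof. by case: (valid_svalid vf). Qed.
Let hf : forall i, fh i = hatn psi i. Proof. by case: (valid_svalid vf). Qed.

Lemma L1 j i (e : psi j = i) : ordw j = fh (ordw i).
Proof. by case: i / e; rewrite hf hat_first // => j' /injf ->. Qed.
Lemma L2 j i (e : psi j = i) : ords j = fh (ords i).
Proof. by case: i / e; rewrite hf hat_last // => j' /injf ->. Qed.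
Lemma L3 i (n : forall j, psi j != i) : fh (ordw i) = fh (ords i).
Proof. by rewrite !hf hat_empty. Qed.

Definition seltype (i : 'I_M) := ({j | psi j = i} + {forall j, psi j != i})%type.
Definition sel (i : 'I_M) : seltype i :=
  match pickP (fun j => psi j == i) with
  | Pick j H => inleft (exist (fun j => psi j = i) j (eqP H))
  | Nopick H => inright (fun j => negbT (H j))
  end.

Definition Zs_of i (s : seltype i) : pob D :=
  match s with inleft (exist j _) => zsing X j | inright _ => zreg X (fh (ordw i)) end.
Definition Zf_of i (s : seltype i) : phom (zreg X (fh (ordw i))) (Zs_of s) :=
  match s as s0 return phom (zreg X (fh (ordw i))) (Zs_of s0) with
  | inleft (exist j e) => hcast (congr1 (zreg X) (L1 e)) erefl (zfwd X j)
  | inright _ => pid _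
  end.
Definition Zb_of i (s : seltype i) : phom (zreg X (fh (ords i))) (Zs_of s) :=
  match s as s0 return phom (zreg X (fh (ords i))) (Zs_of s0) with
  | inleft (exist j e) => hcast (congr1 (zreg X) (L2 e)) erefl (zbwd X j)
  | inright n => hcast (congr1 (zreg X) (L3 n)) erefl (pid _)
  end.
Definition hs_of j (s : seltype (psi j)) : phom (zsing X j) (Zs_of s) :=
  match s as s0 return phom (zsing X j) (Zs_of s0) with
  | inleft (exist j' e) => hcast erefl (congr1 (zsing X) (esym (injf e))) (pid _)
  | inright n => False_rect _ (neq_self_false (n j))
  end.
Definition ws_of i (s : seltype i) : phom (Zs_of s) (zsing T i) :=
  match s as s0 return phom (Zs_of s0) (zsing T i) with
  | inleft (exist j e) => hcast erefl (congr1 (zsing T) e) (msing f j)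
  | inright _ => pcompose (zfwd T i) (mreg f (ordw i))
  end.

Definition Z : zz D :=
  {| zlen := M; zreg := fun i => zreg X (fh i); zsing := fun i => Zs_of (sel i);
     zfwd := fun i => Zf_of (sel i); zbwd := fun i => Zb_of (sel i) |}.
Definition h : zzmap X Z :=
  @Zzmap D X Z psi fh (fun i => pid (zreg X (fh i))) (fun j => hs_of (sel (psi j))).
Definition w : zzmap Z T :=
  @Zzmap D Z T (fun i => i) (fun i => i) (fun i => mreg f i) (fun i => ws_of (sel i)).

Lemma zvob_Z : zvob Z.
Proof.
case: zX => xo so xf xb; case: zT => to tso tf tb.
split => i /=.
- exact: xo.
- by case: (sel i) => [[j e]|n] /=.
- case: (sel i) => [[j e]|n] /=; [exact: hcast_valid | exact: (cl_idv HD)].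
- case: (sel i) => [[j e]|n] /=; apply: hcast_valid => //; exact: (cl_idv HD).
Qed.


Lemma hV1 p (s : seltype (psi p)) (e' : fh (ordw (psi p)) = ordw p) :
  pcompose (hs_of s) (zfwd X p) = pcompose (Zf_of s) (hcast (congr1 (zreg X) e') erefl (pid _)).
Proof.
case: s => [[j e]|n]; last by case: (neq_self_false (n p)).
have ej := injf e; subst j => /=.
move: (esym (injf e)) => e1; rewrite (eq_irrelevance e1 erefl) /= (cl_idl HD).
move: (L1 e) e'; move: (fh (ordw (psi p))) => k e2 e3; subst k; uip.
by rewrite /= (cl_idr HD).
Qed.

Lemma hV2 p (s : seltype (psi p)) (e' : fh (ords (psi p)) = ords p) :
  pcompose (hs_of s) (zbwd X p) = pcompose (Zb_of s) (hcast (congr1 (zreg X) e') erefl (pid _)).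
Proof.
case: s => [[j e]|n]; last by case: (neq_self_false (n p)).
have ej := injf e; subst j => /=.
move: (esym (injf e)) => e1; rewrite (eq_irrelevance e1 erefl) /= (cl_idl HD).
move: (L2 e) e'; move: (fh (ords (psi p))) => k e2 e3; subst k; uip.
by rewrite /= (cl_idr HD).
Qed.

Lemma hV4 i (s : seltype i) (Hi : forall j, psi j != i) (e : fh (ords i) = fh (ordw i)) :
  pcompose (Zf_of s) (pid _) = pcompose (Zb_of s) (hcast (congr1 (zreg X) e) erefl (pid _)).
Proof.
case: s => [[j e0]|n]; first by exfalso; move: (Hi j); rewrite e0 eqxx.
rewrite /=; move: (L3 n) e; move: (fh (ords i)) => k e1 e2; subst k; uip.
by [].
Qed.

Lemma h_valid : zzvalid h.
Proof.
split; first exact: mof.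
split; first exact: hf.
split; first by move=> i; exact: (cl_idv HD).
split.
  move=> j /=; case: (sel (psi j)) => [[j' e]|n]; last by case: (neq_self_false (n j)).
  by apply: hcast_valid; exact: (cl_idv HD).
split.
  move=> i p e; case: i / e => _ e' /=; exact: hV1.
split.
  move=> i p e; case: i / e => _ e' /=; exact: hV2.
split.
  move=> j j' e e'; exfalso; have := injf e => ej; subst j'.
  by move: (ordws_neq e') => /eqP; rewrite -[X in X == _]addn0 -addn1 eqn_add2l.
move=> i Hi e /=; exact: hV4.
Qed.

Lemma wV1 i (s : seltype i) :
  pcompose (ws_of s) (Zf_of s) = pcompose (zfwd T i) (mreg f (ordw i)).
Proof.
case: s => [[j e]|n]; last by rewrite /= (cl_idr HD).
case: i / e => /=.
rewrite hcast_compr.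
case: (valid_svalid vf) => _ _ _ _ [c1 _ _ _].
apply: mk_eq_castk; apply: c1 => j' /injf ->; exact: leqnn.
Qed.

Lemma wV2 i (s : seltype i) :
  pcompose (ws_of s) (Zb_of s) = pcompose (zbwd T i) (mreg f (ords i)).
Proof.
case: (valid_svalid vf) => _ _ _ _ [_ c2 _ c4].
case: s => [[j e]|n].
  case: i / e => /=.
  rewrite hcast_compr.
  apply: mk_eq_castk; apply: c2 => j' /injf ->; exact: leqnn.
rewrite /= hcast_compr (cl_idr HD).
apply: mk_eq_castk; exact: c4.
Qed.

Lemma w_valid : zzvalid w.
Proof.
case: (valid_svalid vf) => _ _ vrf vsf _.
split; first exact: monotone_id.
split; first by move=> i; rewrite hatn_id.
split; first by move=> i; exact: vrf.
split.
  move=> i /=; case: (sel i) => [[j e]|n]; first exact: hcast_valid.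
  apply: (cl_compv HD); [by case: zT | exact: vrf].
split.
  move=> i p e; case: i / e => _ e'; uip; exact: wV1.
split.
  move=> i p e; case: i / e => _ e'; uip; exact: wV2.
split.
  move=> j j' e e'; exfalso; case: j / e e' => e'.
  by move: (ordws_neq e') => /eqP; rewrite -[X in X == _]addn0 -addn1 eqn_add2l.
by move=> i Hi; case: (neq_self_false (Hi i)).
Qed.

Lemma wh_sing j (s : seltype (psi j)) : pcompose (ws_of s) (hs_of s) = msing f j.
Proof.
case: s => [[j' e]|n]; last by case: (neq_self_false (n j)).
have ej := injf e; subst j' => /=.
move: (esym (injf e)) => e1; uip.
by rewrite /= (cl_idr HD).
Qed.

Lemma wh_f : zcomp w h = f.
Proof.
rewrite -[RHS]zzmap_eta.
apply: zzmap_eq => [i|j] /=; first by rewrite (cl_idr HD).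
exact: wh_sing.
Qed.

Lemma iso_sing j (s : seltype (psi j)) (V : phom (zsing T (psi j)) (Zs_of s)) :
  pvhom V -> pcompose V (msing f j) = hs_of s -> pcompose (ws_of s) V = pid _ ->
  isoP (msing f j).
Proof.
case: (valid_svalid vf) => _ _ _ vsf _.
case: s V => [[j' e]|n] V; last by case: (neq_self_false (n j)).
have ej := injf e; subst j' => /=.
move: V; move: (esym (injf e)) => e1; uip => /= V vV H1 H2.
split => //; exists V; split => //; split => //.
Qed.

Lemma iso_empty i (s : seltype i) (V : phom (zsing T i) (Zs_of s)) (R : phom (zreg T (ordw i)) (zreg X (fh (ordw i)))) :
  (forall j, psi j != i) -> pvhom V ->
  pcompose (ws_of s) V = pid _ -> pcompose V (zfwd T i) = pcompose (Zf_of s) R ->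
  pcompose R (mreg f (ordw i)) = pid _ ->
  isoP (pcompose (zfwd T i) (mreg f (ordw i))).
Proof.
case: (valid_svalid vf) => _ _ vrf _ _.
case: s V => [[j e]|n] V Hi; first by exfalso; move: (Hi j); rewrite e eqxx.
move=> /= vV H1 H2 H3.
split; first by apply: (cl_compv HD) => //; case: zT.
exists V; split => //; split => //.
rewrite (cl_assoc HD) H2 (cl_idl HD) H3 //.
Qed.

Lemma simple_good : Good P f.
Proof.
have H0 := cf zvob_Z h_valid (monotone_id (n := M)) (fun j => erefl).
case: H0 => v [[vv [Evf Evs]] _].
have H0 := cf zT vf (monotone_id (n := M)) (fun j => erefl).
case: H0 => v0 [_ U].
have E1 : zid T = v0 := U _ (zid_valid HD T) (zidl HD f) (fun _ => erefl).
have E2 : zcomp w v = v0.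
  apply: U.
  - exact: (comp_valid HD vv w_valid).
  - by rewrite -(zassoc HD) Evf wh_f.
  - by move=> i /=; rewrite Evs.
have Ewv : zcomp w v = zid T by rewrite E1 E2.
clear E1 E2 U v0.
case: v vv Evf Evs Ewv => vs vh vr vsg vv Evf Evs Ewv.
have es : vs = (fun i => i) by apply: functional_extensionality.
subst vs.
case: (valid_svalid vv) => _ hv vrv vsv [c1v _ _ _].
have eh : vh = (fun i => i).
  by apply: functional_extensionality => i; have := hv i => /= ->; rewrite hatn_id.
subst vh.
have [Er Es] := zzmap_inj (Evf : @Zzmap D X Z psi fh _ _ = @Zzmap D X Z psi fh _ _).
have [Er' Es'] := zzmap_inj (Ewv : @Zzmap D T T (fun i => i) (fun i => i) _ _ = @Zzmap D T T (fun i => i) (fun i => i) _ _).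
have Hv1 : forall i, pcompose (vsg i) (zfwd T i) = pcompose (Zf_of (sel i)) (vr (ordw i)).
  move=> i; apply: mk_inj; exact: (c1v i (fun j e => eq_leq (f_equal val (esym e)))).
case: zX => xo xso _ _; case: zT => to tso _ _.
case: (valid_svalid vf) => _ _ vrf vsf _.
split => //.
- move=> i; apply: (dg_iso HP) => //.
  rewrite /isoP; split => //; exists (vr i); split; first exact: vrv. split; [exact: Er | exact: Er'].
- move=> j; apply: (dg_iso HP) => //.
  apply: (iso_sing (V := vsg (psi j))); [exact: vsv | exact: Es | exact: Es'].
- move=> i Hi; apply: (dg_iso HP) => //.
  apply: (iso_empty (V := vsg i) (R := vr (ordw i))); [exact: Hi | exact: vsv | exact: Es' | exact: Hv1 | exact: Er].
Qed.
End Simple.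

Section DegAx.
Variable D : precat.
Hypothesis HD : catlaws D.
Variable P : forall a b : pob D, phom a b -> Prop.
Hypothesis HP : degax P.

Lemma deg_good (X Y : zz D) (f : zzmap X Y) : degZ P f -> Good P f.
Proof.
elim=> {X Y f}.
- move=> X Y f zX zY vf cf inj; exact: simple_good.
- move=> X Y f _ _ vf vert Hr Hs; exact: good_par.
- move=> X Y W f g _ Gf _ Gg; exact: good_comp.
Qed.

Lemma degax_Z : degax (@degZ D P : forall a b : pob (Zpre D), phom a b -> Prop).
Proof.
split.
- by move=> a b f /deg_good [].
- move=> a b f za zb iso.
  have [vert Hr Hs] := iso_slices iso.
  apply: degZ_par => //; first by case: iso.
  + move=> i; apply: (dg_iso HP) => //; [by case: za | by case: zb].
  + move=> j; apply: (dg_iso HP) => //; [by case: za | by case: zb].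
- move=> a b c g f Hf Hg; exact: degZ_comp.
- move=> a b f /deg_good Gf c u v E; exact: (good_mono HP Gf E).
Qed.
End DegAx.

Lemma degax_Zn (C : category) n : degax (@isdeg (precat_of C) n).
Proof.
elim: n => [|n IH]; first exact: degax_base.
exact: (degax_Z (catlaws_Zn C n) IH).
Qed.

Arguments mk {D X Y} k i a.


Section Steps.
Variable D : precat.
Hypothesis HD : catlaws D.

Lemma chain_step (I J : Type) (A1 A2 : I -> pob D) (S : J -> pob D) (j : J) (Z Z' : pob D)
  (a b c : I) (E : a = c) (Eb : b = c)
  (fr1 : phom (A1 a) Z) (gr1 : phom (A2 a) Z) (fr2 : phom (A1 b) Z') (gr2 : phom (A2 b) Z')
  (t : phom Z (S j)) (t' : phom Z' (S j)) (phi : phom (A1 c) (A2 c)) (phi1 : phom (A1 a) (A2 a)) :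
  smk (A := A1) (B := S) (pcompose t fr1) = smk (pcompose t' fr2) ->
  smk (A := A2) (B := S) (pcompose t gr1) = smk (pcompose t' gr2) ->
  (forall W (u v : phom W (A2 a)), pcompose (pcompose t gr1) u = pcompose (pcompose t gr1) v -> u = v) ->
  fr1 = pcompose gr1 phi1 ->
  fr2 = pcompose gr2 (hcast (congr1 A1 (esym Eb)) (congr1 A2 (esym Eb)) phi) ->
  fr1 = pcompose gr1 (hcast (congr1 A1 (esym E)) (congr1 A2 (esym E)) phi).
Proof.
move=> Hf Hg mono H1 H2; subst c b; move: H2 => /= H2.
have {}Hf := smk_inj Hf; have {}Hg := smk_inj Hg.
suff -> : phi = phi1 by [].
apply: mono; symmetry.
rewrite -(cl_assoc HD) -H1 Hf H2 (cl_assoc HD) -Hg //.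
Qed.

Lemma first_step (I J : Type) (A1 A2 : I -> pob D) (B1 B2 : pob D) (S : J -> pob D) (j : J) (Z : pob D)
  (Phi : forall k, phom (A1 k) (A2 k)) (a c : I) (E : c = a)
  (F : phom B1 (S j)) (G : phom B2 (S j)) (x : phom (A1 a) B1) (y : phom (A2 a) B2)
  (t : phom Z (S j)) (fr : phom (A1 c) Z) (gr : phom (A2 c) Z) (ps : phom B1 B2) :
  smk (A := A1) (B := S) (pcompose F x) = smk (pcompose t fr) ->
  smk (A := A2) (B := S) (pcompose G y) = smk (pcompose t gr) ->
  fr = pcompose gr (Phi c) -> F = pcompose G ps ->
  (forall W (u v : phom W B2), pcompose G u = pcompose G v -> u = v) ->
  pcompose ps x = pcompose y (Phi a).
Proof.
move=> Hf Hg H3 H4 mono; subst c.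
have {}Hf := smk_inj Hf; have {}Hg := smk_inj Hg.
apply: mono; rewrite !(cl_assoc HD) -H4 Hf H3 Hg (cl_assoc HD) //.
Qed.
End Steps.

Lemma hatn_mono n m (psi : 'I_n -> 'I_m) (mo : monotone psi) (i i' : 'I_m.+1) :
  i <= i' -> hatn psi i <= hatn psi i'.
Proof.
move=> H; case: (ltnP (hatn psi i') n) => Hn; last first.
  by apply: leq_trans Hn; rewrite -ltnS ltn_ord.
have := leqnn (hatn psi i'); rewrite -[X in _ <= X]/(nat_of_ord (Ordinal Hn)).
rewrite hatn_le // => H1.
by rewrite -[X in _ <= X]/(nat_of_ord (Ordinal Hn)) hatn_le //; apply: leq_trans H1.
Qed.

Section PC.
Variable D : precat.
Hypothesis HD : catlaws D.
Variable P : forall a b : pob D, phom a b -> Prop.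
Hypothesis HP : degax P.

Lemma pc (N : nat) (xr yr : 'I_N.+1 -> pob D) (xs ys : 'I_N -> pob D)
  (xf : forall j, phom (xr (ordw j)) (xs j)) (xb : forall j, phom (xr (ords j)) (xs j))
  (yf : forall j, phom (yr (ordw j)) (ys j)) (yb : forall j, phom (yr (ords j)) (ys j))
  (T : zz D) (fs : 'I_N -> 'I_(zlen T)) (fh gh : 'I_(zlen T).+1 -> 'I_N.+1)
  (fr : forall i, phom (xr (fh i)) (zreg T i)) (fsg : forall j, phom (xs j) (zsing T (fs j)))
  (gr : forall i, phom (yr (gh i)) (zreg T i)) (gsg : forall j, phom (ys j) (zsing T (fs j))) :
  Good P (@Zzmap D (@Zz D N xr xs xf xb) T fs fh fr fsg) ->
  Good P (@Zzmap D (@Zz D N yr ys yf yb) T fs gh gr gsg) ->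
  (forall j, exists ph : phom (xs j) (ys j), pvhom ph /\ fsg j = pcompose (gsg j) ph) ->
  (forall i, exists ph : phom (xr (fh i)) (yr (gh i)), pvhom ph /\ fr i = pcompose (gr i) ph) ->
  exists phi : zzmap (@Zz D N xr xs xf xb) (@Zz D N yr ys yf yb),
    zzvalid phi /\ @Zzmap D (@Zz D N xr xs xf xb) T fs fh fr fsg = zcomp (@Zzmap D (@Zz D N yr ys yf yb) T fs gh gr gsg) phi.
Proof.
move=> Gf Gg Hs Hr.
case: (Gf) => vf injf rf sf ef; case: (Gg) => vg _ rg sg eg.
case: (valid_svalid vf) => /= mof hf _ _ [c1f c2f _ c4f].
case: (valid_svalid vg) => /= _ hg _ _ [c1g c2g _ c4g].
have efh : fh = hatn fs by apply: functional_extensionality.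
have egh : gh = hatn fs by apply: functional_extensionality.
subst fh gh.
have Hk : forall k : 'I_N.+1, exists ph : phom (xr k) (yr k), pvhom ph /\
    forall i (E : hatn fs i = k),
      fr i = pcompose (gr i) (hcast (congr1 xr (esym E)) (congr1 yr (esym E)) ph).
  move=> k.
  have [i1 [Ei1 Hmax]] : exists i1, hatn fs i1 = k /\ forall i, hatn fs i = k -> i <= i1.
    case: (ltnP k N) => Hk.
    - exists (ordw (fs (Ordinal Hk))); split.
        rewrite hat_first //; first by apply: val_inj.
        by move=> j /injf ->.
      move=> i Ei; have := leqnn k; rewrite -[X in _ <= X]/(nat_of_ord (Ordinal Hk)).
      by rewrite -{1}Ei hatn_le.
    - exists ord_max; split.
        rewrite hat_max; apply: val_inj => /=.
        by apply/eqP; rewrite eqn_leq Hk -ltnS ltn_ord.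
      by move=> i _; rewrite -ltnS ltn_ord.
  case: k / Ei1 Hmax => Hmax.
  have [ph [vph Hph]] := Hr i1.
  exists ph; split => //.
  suff H : forall d (i : 'I_(zlen T).+1), i1 - i = d -> forall (E : hatn fs i = hatn fs i1),
      fr i = pcompose (gr i) (hcast (congr1 xr (esym E)) (congr1 yr (esym E)) ph).
    by move=> i E; apply: (H _ i erefl).
  elim=> [|d IH] i Hd E.
    have ei : i = i1.
      apply/val_inj/eqP; rewrite eqn_leq (Hmax _ E) /=.
      by rewrite -subn_eq0 Hd.
    subst i; uip; exact: Hph.
  have Hii : i < zlen T.
    apply: (@leq_trans (i1 : nat)); first by rewrite -subn_gt0 Hd.
    by rewrite -ltnS ltn_ord.
  have [ii ei] : exists ii : 'I_(zlen T), ordw ii = i by exists (Ordinal Hii); apply: val_inj.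
  clear Hii; subst i.
  have Eb : hatn fs (ords ii) = hatn fs i1.
    apply/val_inj/eqP; rewrite eqn_leq; apply/andP; split.
    - by apply: hatn_mono => //=; rewrite -subn_gt0 Hd.
    - by rewrite -E; apply: hatn_mono => //=.
  have Hn : forall p, fs p != ii.
    move=> p; apply/negP => /eqP Ep.
    have := E; rewrite -Eb -Ep hat_first //; last by move=> j /injf ->.
    rewrite hat_last //; last by move=> j /injf ->.
    move=> /(congr1 val) /= H.
    have : (p : nat) != bump 0 p by rewrite /bump leq0n add1n neq_ltn ltnSn.
    by rewrite -H eqxx.
  have [ph1 [_ Hph1]] := Hr (ordw ii).
  apply: (@chain_step D HD _ _ xr yr (zsing T) ii _ _ _ _ _ E Eb _ _ (fr (ords ii)) (gr (ords ii))
            (zfwd T ii) (zbwd T ii) ph ph1).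
  - exact: (c4f ii Hn).
  - exact: (c4g ii Hn).
  - move=> W u v; exact: (dg_mono HP (eg ii Hn)).
  - exact: Hph1.
  - apply: IH; by rewrite /= subnS Hd.
pose phir := fun k => proj1_sig (constructive_indefinite_description _ (Hk k)).
have Hphir : forall k, pvhom (phir k) /\ forall i (E : hatn fs i = k),
      fr i = pcompose (gr i) (hcast (congr1 xr (esym E)) (congr1 yr (esym E)) (phir k)).
  move=> k; exact: (proj2_sig (constructive_indefinite_description _ (Hk k))).
pose phis := fun j => proj1_sig (constructive_indefinite_description _ (Hs j)).
have Hphis : forall j, pvhom (phis j) /\ fsg j = pcompose (gsg j) (phis j).
  move=> j; exact: (proj2_sig (constructive_indefinite_description _ (Hs j))).
exists (@Zzmap D (@Zz D N xr xs xf xb) (@Zz D N yr ys yf yb) (fun j => j) (fun i => i) phir phis).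
split.
- split; first exact: monotone_id.
  split; first by move=> i; rewrite hatn_id.
  split; first by move=> i; case: (Hphir i).
  split; first by move=> j; case: (Hphis j).
  split.
    move=> i p e; case: i / e => Hmin e'; uip => /=.
    have ea : hatn fs (ordw (fs p)) = ordw p by rewrite hat_first // => j /injf ->.
    apply: (@first_step D HD _ _ xr yr _ _ (zsing T) (fs p) _ phir _ _ ea (fsg p) (gsg p) (xf p) (yf p)
              (zfwd T (fs p)) (fr (ordw (fs p))) (gr (ordw (fs p))) (phis p)).
    + by apply: c1f => j /injf ->.
    + by apply: c1g => j /injf ->.
    + exact: ((Hphir _).2 _ erefl).
    + exact: (Hphis p).2.
    + move=> W u v; exact: (dg_mono HP (sg p)).
  split.
    move=> i p e; case: i / e => Hmin e'; uip => /=.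
    have ea : hatn fs (ords (fs p)) = ords p by rewrite hat_last // => j /injf ->.
    apply: (@first_step D HD _ _ xr yr _ _ (zsing T) (fs p) _ phir _ _ ea (fsg p) (gsg p) (xb p) (yb p)
              (zbwd T (fs p)) (fr (ords (fs p))) (gr (ords (fs p))) (phis p)).
    + by apply: c2f => j /injf ->.
    + by apply: c2g => j /injf ->.
    + exact: ((Hphir _).2 _ erefl).
    + exact: (Hphis p).2.
    + move=> W u v; exact: (dg_mono HP (sg p)).
  split.
    move=> j j' e e'; exfalso; case: j / e e' => e'.
    by move: (ordws_neq e') => /eqP; rewrite -[X in X == _]addn0 -addn1 eqn_add2l.
  by move=> i Hi; case: (neq_self_false (Hi i)).
- apply: zzmap_eq => [i|j] /=.
  + exact: ((Hphir _).2 _ erefl).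
  + exact: (Hphis j).2.
Qed.
End PC.

Section PCIso.
Variable D : precat.
Hypothesis HD : catlaws D.
Variable P : forall a b : pob D, phom a b -> Prop.
Hypothesis HP : degax P.

Lemma pc_iso (N : nat) (xr yr : 'I_N.+1 -> pob D) (xs ys : 'I_N -> pob D)
  (xf : forall j, phom (xr (ordw j)) (xs j)) (xb : forall j, phom (xr (ords j)) (xs j))
  (yf : forall j, phom (yr (ordw j)) (ys j)) (yb : forall j, phom (yr (ords j)) (ys j))
  (T : zz D) (fs : 'I_N -> 'I_(zlen T)) (fh gh : 'I_(zlen T).+1 -> 'I_N.+1)
  (fr : forall i, phom (xr (fh i)) (zreg T i)) (fsg : forall j, phom (xs j) (zsing T (fs j)))
  (gr : forall i, phom (yr (gh i)) (zreg T i)) (gsg : forall j, phom (ys j) (zsing T (fs j))) :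
  Good P (@Zzmap D (@Zz D N xr xs xf xb) T fs fh fr fsg) ->
  Good P (@Zzmap D (@Zz D N yr ys yf yb) T fs gh gr gsg) ->
  (forall j, exists ph : phom (xs j) (ys j), pvhom ph /\ fsg j = pcompose (gsg j) ph) ->
  (forall i, exists ph : phom (xr (fh i)) (yr (gh i)), pvhom ph /\ fr i = pcompose (gr i) ph) ->
  (forall j, exists ph : phom (ys j) (xs j), pvhom ph /\ gsg j = pcompose (fsg j) ph) ->
  (forall i, exists ph : phom (yr (gh i)) (xr (fh i)), pvhom ph /\ gr i = pcompose (fr i) ph) ->
  exists phi : zzmap (@Zz D N xr xs xf xb) (@Zz D N yr ys yf yb),
    @isoP (Zpre D) _ _ phi /\
    @Zzmap D (@Zz D N xr xs xf xb) T fs fh fr fsg = zcomp (@Zzmap D (@Zz D N yr ys yf yb) T fs gh gr gsg) phi.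
Proof.
move=> Gf Gg Hs Hr Hs' Hr'.
have [phi [vphi Ephi]] := pc HD HP Gf Gg Hs Hr.
have [psi [vpsi Epsi]] := pc HD HP Gg Gf Hs' Hr'.
exists phi; split => //; split => //; exists psi; split => //; split => /=.
- apply: (good_mono HP Gf).
  by rewrite (zassoc HD) -Epsi -Ephi (zidr HD).
- apply: (good_mono HP Gg).
  by rewrite (zassoc HD) -Ephi -Epsi (zidr HD).
Qed.
End PCIso.

Definition Part1 (D E : precat) (P : forall a b : pob D, phom a b -> Prop) (F : prefunctor D E) : Prop :=
  forall (T X Y : pob D) (f : phom X T) (g : phom Y T), pvob X -> pvob Y -> P _ _ f -> P _ _ g ->
   existT (fun a => phom a (fob F T)) (fob F X) (fhom F f) =
   existT (fun a => phom a (fob F T)) (fob F Y) (fhom F g) ->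
   exists phi : phom X Y, isoP phi /\ f = pcompose g phi.

Lemma part1_base (C : category) : Part1 (@isdeg (precat_of C) 0) (to_term C).
Proof.
move=> T X Y f g _ _ df dg _.
have [_ [g' [_ [/= g1 g2]]]] := dg.
exists (pcompose g' f); split.
- apply: (dg_comp (degax_base C)) => //.
  split => //; exists g; split => //.
- by rewrite /= ccompA g2 ccomp1l.
Qed.

Section Part1Z.
Variables D E : precat.
Hypothesis HD : catlaws D.
Variable P : forall a b : pob D, phom a b -> Prop.
Hypothesis HP : degax P.
Variable F : prefunctor D E.
Hypothesis H1 : Part1 P F.

Lemma part1_Z : Part1 (@degZ D P : forall a b : pob (Zpre D), phom a b -> Prop) (Zfun F).
Proof.
move=> T X Y f g zX zY df dg Hsh.
have Gf := deg_good HD HP df; have Gg := deg_good HD HP dg.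
have el : zlen X = zlen Y := congr1 (fun s => zlen (projT1 s)) Hsh.
move: f zX df Gf Hsh el; case: X => N xr xs xf xb f zX df Gf Hsh el /=.
move: g zY dg Gg Hsh el; case: Y => N' yr ys yf yb g zY dg Gg Hsh el /=.
simpl in el; subst N'.
move: df Gf Hsh; case: f => fs fh fr fsg df Gf Hsh.
move: dg Gg Hsh; case: g => gs gh gr gsg dg Gg Hsh.
have Efs : gs = fs.
  apply: functional_extensionality => j; apply: val_inj.
  have := congr1 (fun s : {a : zz E & zzmap a (zfob F T)} => omap (fun j' => nat_of_ord (mfs (projT2 s) j'))
                   (insub (nat_of_ord j) : option 'I_(zlen (projT1 s)))) Hsh.
  by rewrite /= !valK /= => [[]].
subst gs.
have Hsj : forall j, existT (fun a => phom a (fob F (zsing T (fs j)))) (fob F (xs j)) (fhom F (fsg j)) =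
                     existT (fun a => phom a (fob F (zsing T (fs j)))) (fob F (ys j)) (fhom F (gsg j)).
  move=> j.
  have := congr1 (fun s : {a : zz E & zzmap a (zfob F T)} => omap (fun j' => existT (fun k : 'I_(zlen T) => {a : pob E & phom a (fob F (zsing T k))})
             (mfs (projT2 s) j')
             (existT (fun a => phom a (fob F (zsing T (mfs (projT2 s) j')))) (zsing (projT1 s) j') (msing (projT2 s) j')))
             (insub (nat_of_ord j) : option 'I_(zlen (projT1 s)))) Hsh.
  rewrite /= !valK /= => [[]] E1; move=> E2; exact: (inj_pair2 _ _ _ _ _ E2).
have Hri : forall i, existT (fun a => phom a (fob F (zreg T i))) (fob F (xr (fh i))) (fhom F (fr i)) =
                     existT (fun a => phom a (fob F (zreg T i))) (fob F (yr (gh i))) (fhom F (gr i)).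
  move=> i.
  exact: (congr1 (fun s : {a : zz E & zzmap a (zfob F T)} => existT (fun a => phom a (fob F (zreg T i))) (zreg (projT1 s) (mfh (projT2 s) i)) (mreg (projT2 s) i)) Hsh).
case: zX => zxr zxs _ _; case: zY => zyr zys _ _.
case: (Gf) => _ _ Pfr Pfs _; case: (Gg) => _ _ Pgr Pgs _.
apply: (pc_iso HD HP Gf Gg).
- move=> j; have [ph [[vph _] E1]] := H1 (zxs j) (zys j) (Pfs j) (Pgs j) (Hsj j).
  by exists ph.
- move=> i; have [ph [[vph _] E1]] := H1 (zxr _) (zyr _) (Pfr i) (Pgr i) (Hri i).
  by exists ph.
- move=> j; have [ph [[vph _] E1]] := H1 (zys j) (zxs j) (Pgs j) (Pfs j) (esym (Hsj j)).
  by exists ph.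
- move=> i; have [ph [[vph _] E1]] := H1 (zyr _) (zxr _) (Pgr i) (Pfr i) (esym (Hri i)).
  by exists ph.
Qed.
End Part1Z.

Lemma part1_Zn (C : category) n : Part1 (@isdeg (precat_of C) n) (Znf n (to_term C)).
Proof.
elim: n => [|n IH]; first exact: part1_base.
exact: (part1_Z (catlaws_Zn C n) (degax_Zn C n) IH).
Qed.

Definition Part2 (D : precat) (P : forall a b : pob D, phom a b -> Prop) : Prop :=
  forall T : pob D, pvob T ->
  exists (k : nat) (l : 'I_k -> {X : pob D & phom X T}),
     (forall i, pvob (projT1 (l i)) /\ P _ _ (projT2 (l i))) /\
     (forall (X : pob D) (f : phom X T), pvob X -> P _ _ f ->
        exists (i : 'I_k) (phi : phom X (projT1 (l i))),
          isoP phi /\ f = pcompose (projT2 (l i)) phi).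

Lemma part2_base (C : category) : Part2 (@isdeg (precat_of C) 0).
Proof.
move=> T _; exists 1, (fun _ => existT (fun X => phom X T) T (cid T)); split.
- move=> i; split => //=; split => //; exists (cid T); split => //; split; exact: ccomp1l.
- move=> X f _ df; exists ord0, f; split => //=.
  by rewrite ccomp1l.
Qed.

Lemma iso_trans_hyp (D : precat) (HD : catlaws D) (a b c t : pob D) (F : phom a t) (G : phom b t)
  (L : phom c t) (p1 : phom a c) (p2 : phom b c) :
  pvhom p1 -> isoP p2 -> F = pcompose L p1 -> G = pcompose L p2 ->
  exists p : phom a b, pvhom p /\ F = pcompose G p.
Proof.
move=> v1 [_ [q [vq [q1 q2]]]] E1 E2.
exists (pcompose q p1); split; first exact: (cl_compv HD).
by rewrite E2 (cl_assoc HD) -((cl_assoc HD) _ _ _ _ L) q2 (cl_idr HD).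
Qed.

Section Part2Z.
Variable D : precat.
Hypothesis HD : catlaws D.
Variable P : forall a b : pob D, phom a b -> Prop.
Hypothesis HP : degax P.
Variable T : zz D.
Hypothesis zT : zvob T.
Let M := zlen T.
Variable ks : 'I_M -> nat.
Variable ls : forall i : 'I_M, 'I_(ks i) -> {X : pob D & phom X (zsing T i)}.
Variable kr : 'I_M.+1 -> nat.
Variable lr : forall i : 'I_M.+1, 'I_(kr i) -> {X : pob D & phom X (zreg T i)}.
Hypothesis covs : forall i (X : pob D) (f : phom X (zsing T i)), pvob X -> P f ->
   exists (a : 'I_(ks i)) (phi : phom X (projT1 (ls a))), isoP phi /\ f = pcompose (projT2 (ls a)) phi.
Hypothesis covr : forall i (X : pob D) (f : phom X (zreg T i)), pvob X -> P f ->
   exists (a : 'I_(kr i)) (phi : phom X (projT1 (lr a))), isoP phi /\ f = pcompose (projT2 (lr a)) phi.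

Let K := \max_(i < M) ks i.
Let K' := \max_(i < M.+1) kr i.

Definition ctype := ('I_M.+1 * {ffun 'I_M -> 'I_M} * {ffun 'I_M -> 'I_K.+1} * {ffun 'I_M.+1 -> 'I_K'.+1})%type.

Definition Realizes (c : ctype) (X : zz D) (f : zzmap X T) : Prop :=
  [/\ (zlen X : nat) = c.1.1.1,
      forall j : 'I_(zlen X), exists k : 'I_M, (k : nat) = j /\ mfs f j = c.1.1.2 k,
      forall j : 'I_(zlen X), exists (h : (c.1.2 (mfs f j) : nat) < ks (mfs f j))
         (phi : phom (zsing X j) (projT1 (ls (Ordinal h)))),
         isoP phi /\ msing f j = pcompose (projT2 (ls (Ordinal h))) phi
    & forall i, exists (h : (c.2 i : nat) < kr i) (phi : phom (zreg X (mfh f i)) (projT1 (lr (Ordinal h)))),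
         isoP phi /\ mreg f i = pcompose (projT2 (lr (Ordinal h))) phi].

Lemma code_exists (X : zz D) (f : zzmap X T) : zvob X -> degZ P f -> exists c, Realizes c f.
Proof.
move=> zX df; have [vf injf rf sf _] := deg_good HD HP df.
case: (zX) => zxr zxs _ _.
have hN : zlen X < M.+1 by rewrite ltnS; have := @leq_card _ _ (mfs f) injf; rewrite !card_ord.
have Hj : forall j : 'I_(zlen X), exists a : 'I_(ks (mfs f j)), exists phi : phom (zsing X j) (projT1 (ls a)),
    isoP phi /\ msing f j = pcompose (projT2 (ls a)) phi.
  by move=> j; apply: covs.
have Hi : forall i, exists a : 'I_(kr i), exists phi : phom (zreg X (mfh f i)) (projT1 (lr a)),
    isoP phi /\ mreg f i = pcompose (projT2 (lr a)) phi.
  by move=> i; apply: covr.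
pose idx := fun j => proj1_sig (constructive_indefinite_description _ (Hj j)).
have Hidx : forall j, exists phi : phom (zsing X j) (projT1 (ls (idx j))),
    isoP phi /\ msing f j = pcompose (projT2 (ls (idx j))) phi.
  move=> j; exact: (proj2_sig (constructive_indefinite_description _ (Hj j))).
pose idr := fun i => proj1_sig (constructive_indefinite_description _ (Hi i)).
have Hidr : forall i, exists phi : phom (zreg X (mfh f i)) (projT1 (lr (idr i))),
    isoP phi /\ mreg f i = pcompose (projT2 (lr (idr i))) phi.
  move=> i; exact: (proj2_sig (constructive_indefinite_description _ (Hi i))).
exists (Ordinal hN,
        [ffun k : 'I_M => odflt k (omap (mfs f) (insub (nat_of_ord k) : option 'I_(zlen X)))],
        [ffun i : 'I_M => odflt ord0 (omap (fun j => inord (nat_of_ord (idx j)) : 'I_K.+1) [pick j | mfs f j == i])],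
        [ffun i : 'I_M.+1 => inord (nat_of_ord (idr i)) : 'I_K'.+1]).
split => //=.
- move=> j; have hj : (j : nat) < M by apply: leq_trans (ltn_ord j) _; rewrite -ltnS.
  exists (Ordinal hj); split => //; rewrite ffunE /=.
  by rewrite valK.
- move=> j; rewrite ffunE.
  case: pickP => [j' /eqP /injf Ej|Hn]; last by move: (Hn j); rewrite eqxx.
  subst j' => /=.
  have hk : (idx j : nat) <= K.
    apply: (leq_trans (ltnW (ltn_ord (idx j)))).
    by rewrite /K; apply: (@leq_bigmax _ ks).
  have e1 : (inord (idx j) : 'I_K.+1) = idx j :> nat by rewrite inordK.
  have h : (inord (idx j) : 'I_K.+1) < ks (mfs f j) by rewrite e1.
  exists h.
  have -> : Ordinal h = idx j by apply: val_inj.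
  exact: Hidx.
- move=> i; rewrite ffunE.
  have hk : (idr i : nat) <= K'.
    apply: (leq_trans (ltnW (ltn_ord (idr i)))).
    by rewrite /K'; apply: (@leq_bigmax _ kr).
  have e1 : (inord (idr i) : 'I_K'.+1) = idr i :> nat by rewrite inordK.
  have h : (inord (idr i) : 'I_K'.+1) < kr i by rewrite e1.
  exists h.
  have -> : Ordinal h = idr i by apply: val_inj.
  exact: Hidr.
Qed.

Lemma codes_iso (c : ctype) (X Y : zz D) (f : zzmap X T) (g : zzmap Y T) :
  degZ P f -> degZ P g -> Realizes c f -> Realizes c g ->
  exists phi : zzmap X Y, @isoP (Zpre D) X Y phi /\ f = zcomp g phi.
Proof.
move=> df dg Rf Rg.
have Gf := deg_good HD HP df; have Gg := deg_good HD HP dg.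
have el : zlen X = zlen Y by case: Rf => e1 _ _ _; case: Rg => e2 _ _ _; rewrite e1 e2.
move: f df Gf Rf el; case: X => N xr xs xf xb f df Gf Rf el /=.
move: g dg Gg Rg el; case: Y => N' yr ys yf yb g dg Gg Rg el /=.
simpl in el; subst N'.
move: df Gf Rf; case: f => fs fh fr fsg df Gf Rf.
move: dg Gg Rg; case: g => gs gh gr gsg dg Gg Rg.
case: Rf => /= _ Rf2 Rf3 Rf4; case: Rg => /= _ Rg2 Rg3 Rg4.
have Efs : gs = fs.
  apply: functional_extensionality => j.
  have [k [ek ->]] := Rg2 j; have [k' [ek' ->]] := Rf2 j.
  by congr (_ _); apply: val_inj; rewrite /= ek ek'.
subst gs.
apply: (pc_iso HD HP Gf Gg).
- move=> j; have [h1 [p1 [i1 E1]]] := Rf3 j; have [h2 [p2 [i2 E2]]] := Rg3 j.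
  have eh : h2 = h1 := eq_irrelevance h2 h1. subst h2.
  exact: (iso_trans_hyp HD (proj1 i1) i2 E1 E2).
- move=> i; have [h1 [p1 [i1 E1]]] := Rf4 i; have [h2 [p2 [i2 E2]]] := Rg4 i.
  have eh : h2 = h1 := eq_irrelevance h2 h1. subst h2.
  exact: (iso_trans_hyp HD (proj1 i1) i2 E1 E2).
- move=> j; have [h1 [p1 [i1 E1]]] := Rf3 j; have [h2 [p2 [i2 E2]]] := Rg3 j.
  have eh : h2 = h1 := eq_irrelevance h2 h1. subst h2.
  exact: (iso_trans_hyp HD (proj1 i2) i1 E2 E1).
- move=> i; have [h1 [p1 [i1 E1]]] := Rf4 i; have [h2 [p2 [i2 E2]]] := Rg4 i.
  have eh : h2 = h1 := eq_irrelevance h2 h1. subst h2.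
  exact: (iso_trans_hyp HD (proj1 i2) i1 E2 E1).
Qed.

Definition Rep (c : ctype) : {X : zz D & zzmap X T} :=
  match excluded_middle_informative (exists s : {X : zz D & zzmap X T},
          zvob (projT1 s) /\ degZ P (projT2 s) /\ Realizes c (projT2 s)) with
  | left H => proj1_sig (constructive_indefinite_description _ H)
  | right _ => existT (fun X => zzmap X T) T (zid T)
  end.

Lemma Rep_ok c : zvob (projT1 (Rep c)) /\ degZ P (projT2 (Rep c)).
Proof.
rewrite /Rep; case: excluded_middle_informative => H.
  by case: (proj2_sig (constructive_indefinite_description _ H)) => [? [? _]].
split => //=.
apply: (dg_iso (degax_Z HD HP)) => //.
split; first exact: zid_valid.
exists (zid T); split; first exact: zid_valid.
by split => /=; rewrite (zidl HD).
Qed.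

Lemma Rep_real c (X : zz D) (f : zzmap X T) : zvob X -> degZ P f -> Realizes c f ->
  Realizes c (projT2 (Rep c)).
Proof.
move=> zX df Rf; rewrite /Rep; case: excluded_middle_informative => H.
  by case: (proj2_sig (constructive_indefinite_description _ H)) => [? [? ?]].
by exfalso; apply: H; exists (existT _ X f).
Qed.

Lemma part2_sec : exists (k : nat) (l : 'I_k -> {X : pob (Zpre D) & phom X T}),
     (forall i, pvob (projT1 (l i)) /\ degZ P (projT2 (l i))) /\
     (forall (X : pob (Zpre D)) (f : phom X T), pvob X -> degZ P f ->
        exists (i : 'I_k) (phi : phom X (projT1 (l i))),
          isoP phi /\ f = pcompose (projT2 (l i)) phi).
Proof.
exists #|{: ctype}|, (fun x => Rep (enum_val x)); split.
  move=> x; exact: Rep_ok.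
move=> X f zX df.
have [c Rc] := code_exists zX df.
exists (enum_rank c); rewrite enum_rankK.
have := Rep_ok c; have := Rep_real zX df Rc.
case: (Rep c) => Y g /= Rg [zY dg].
exact: (codes_iso df dg Rc Rg).
Qed.
End Part2Z.

Lemma part2_Z (D : precat) (HD : catlaws D) (P : forall a b : pob D, phom a b -> Prop) (HP : degax P) :
  Part2 P -> Part2 (@degZ D P : forall a b : pob (Zpre D), phom a b -> Prop).
Proof.
move=> H2 T zT.
case: (zT) => ztr zts _ _.
have Hs := fun i => H2 _ (zts i).
have Hr := fun i => H2 _ (ztr i).
pose ks := fun i => proj1_sig (constructive_indefinite_description _ (Hs i)).
pose ls := fun i => proj1_sig (constructive_indefinite_description _ (proj2_sig (constructive_indefinite_description _ (Hs i)))).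
pose kr := fun i => proj1_sig (constructive_indefinite_description _ (Hr i)).
pose lr := fun i => proj1_sig (constructive_indefinite_description _ (proj2_sig (constructive_indefinite_description _ (Hr i)))).
apply: (@part2_sec D HD P HP T zT ks ls kr lr).
- move=> i; exact: (proj2 (proj2_sig (constructive_indefinite_description _ (proj2_sig (constructive_indefinite_description _ (Hs i)))))).
- move=> i; exact: (proj2 (proj2_sig (constructive_indefinite_description _ (proj2_sig (constructive_indefinite_description _ (Hr i)))))).
Qed.

Lemma part2_Zn (C : category) n : Part2 (@isdeg (precat_of C) n).
Proof.
elim: n => [|n IH]; first exact: part2_base.
exact: (part2_Z (catlaws_Zn C n) (degax_Zn C n) IH).
Qed.


Theorem lemma4p3 (C : category) (n : nat) (T : pob (Zn n (precat_of C))) :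
  pvob T ->
  (forall (X Y : pob (Zn n (precat_of C))) (f : phom X T) (g : phom Y T),
     pvob X -> pvob Y -> isdeg f -> isdeg g ->
     existT (fun a => phom a (fob (Znf n (to_term C)) T))
            (fob (Znf n (to_term C)) X) (fhom (Znf n (to_term C)) f)
     = existT (fun a => phom a (fob (Znf n (to_term C)) T))
            (fob (Znf n (to_term C)) Y) (fhom (Znf n (to_term C)) g) ->
     exists phi : phom X Y, isoP phi /\ f = pcompose g phi)
  /\
  (exists (k : nat) (l : 'I_k -> {X : pob (Zn n (precat_of C)) & phom X T}),
     (forall i, pvob (projT1 (l i)) /\ isdeg (projT2 (l i))) /\
     (forall (X : pob (Zn n (precat_of C))) (f : phom X T), pvob X -> isdeg f ->
        exists (i : 'I_k) (phi : phom X (projT1 (l i))),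
          isoP phi /\ f = pcompose (projT2 (l i)) phi)).
Proof.
move=> zT; split.
- move=> X Y f g zX zY df dg E.
  exact: (@part1_Zn C n T X Y f g zX zY df dg E).
- exact: (@part2_Zn C n T zT).
Qed.
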